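(* The functor $\iota\colon \mathcal{D}iag \to \mathcal{D}iag^S$ induced by the inclusion of generators $\mathcal{D}_0 \hookrightarrow \mathcal{D}^S_0$ is an isomorphism of categories.
   Context: Monoidal categories are strict. In a braided monoidal category with braiding $\tau$, a coalgebra is an object $C$ with $\Delta\colon C\to C\otimes C$, $\varepsilon\colon C\to\mathbf 1$ satisfying $(\mathrm{id}\otimes\Delta)\Delta=(\Delta\otimes\mathrm{id})\Delta$ and $(\varepsilon\otimes\mathrm{id})\Delta=\mathrm{id}=(\mathrm{id}\otimes\varepsilon)\Delta$; if $C,C'$ are coalgebras, $C\otimes C'$ is a coalgebra with counit $\varepsilon\otimes\varepsilon'$ and coproduct $(\mathrm{id}_C\otimes\tau_{C,C'}\otimes\mathrm{id}_{C'})(\Delta\otimes\Delta')$; hence $C^{\otimes n}$ is a coalgebra for all $n\ge 0$. For a coalgebra $C$ in a braided category $\mathcal{C}$, the convolution category $\mathrm{Conv}_{\mathcal C}(C,\mathbf 1)$ has objects the non-negative integers, no morphisms $m\to n$ for $m\ne n$, and $\mathrm{End}(n)=\mathrm{Hom}_{\mathcal C}(C^{\otimes n},\mathbf 1)$ with composition $f\circ g=(f\otimes g)\Delta_{C^{\otimes n}}$ and identity $\varepsilon^{\otimes n}$. Let $\mathcal{D}_0$ be the braided strict monoidal category freely generated by one object $*$ and morphisms $\Delta\colon *\to *\otimes *$, $\varepsilon\colon *\to\mathbf 1$, $\omega_+,\omega_-\colon *\otimes*\to\mathbf 1$, $\theta_+,\theta_-\colon *\to\mathbf 1$; let $\mathcal{D}$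 be its quotient by the relations $(\mathrm{id}_*\otimes\Delta)\Delta=(\Delta\otimes\mathrm{id}_* )\Delta$ and $(\mathrm{id}_*\otimes\varepsilon)\Delta=\mathrm{id}_*=(\varepsilon\otimes\mathrm{id}_* )\Delta$ (i.e. by the smallest congruence compatible with composition and tensor product containing them). Let $\mathcal{D}^S_0$ be the braided strict monoidal category freely generated by $*$ and the same morphisms together with two further morphisms $S, S^{-1}\colon *\to *$ (formal generators), and let $\mathcal{D}^S$ be its quotient by the two relations above together with: $SS^{-1}=\mathrm{id}_*=S^{-1}S$; $\Delta S=(S\otimes S)\tau_{*,*}\Delta$; $\varepsilon S=\varepsilon$; $\theta_\pm S=\theta_\pm$; $\omega_+(S\otimes\mathrm{id}_* )=\omega_-=\omega_+(\mathrm{id}_*\otimes S)$; $\omega_+(S^{-1}\otimes\mathrm{id}_* )=\omega_-\tau_{*,*}=\omega_+(\mathrm{id}_*\otimes S^{-1})$, where $\tau_{*,*}$ is the braiding of $*$ with itself. In $\mathcal D$ and $\mathcal D^S$, $( *,\Delta,\varepsilon)$ is a coalgebra. Define $\mathcal{D}iag=\mathrm{Conv}_{\mathcal D}( *,\mathbf 1)$ and $\mathcal{D}iag^S=\mathrm{Conv}_{\mathcal D^S}( *,\mathbf 1)$. The inclusion $\mathcal D_0\hookrightarrow\mathcal D^S_0$ induces a functor $\mathcal D\to\mathcal D^S$ and hence a functor $\iota\colon\mathcal{D}iag\to\mathcal{D}iag^S$ which is the identity on objects. *)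

(* Defs.v *)
(* a syntactic (term-model) presentation of free braided strict
   monoidal categories on one generating object *, whose objects are the
   tensor powers *^{(x)n}, i.e. natural numbers (tensor = +, unit = 0). *)
From Stdlib Require Import Arith.
Set Implicit Arguments.

Inductive term (G : Type) : Type :=
| Gen (g : G)
| Id (n : nat)
| Comp (f g : term G)        (* f o g *)
| Tens (f g : term G)
| Braid (m n : nat)
| BraidInv (m n : nat).

Arguments Id {G}. Arguments Braid {G}. Arguments BraidInv {G}.

Section Terms.
Variable G : Type.
Variable dc : G -> nat * nat. (* (source, target) of generators *)

Fixpoint ty (t : term G) : option (nat * nat) :=
  match t with
  | Gen g => Some (dc g)
  | Id n => Some (n, n)
  | Comp f g =>
      match ty f, ty g with
      | Some (a, b), Some (c, d) => if Nat.eqb d a then Some (c, b) else None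
      | _, _ => None
      end
  | Tens f g =>
      match ty f, ty g with
      | Some (a, b), Some (c, d) => Some (a + c, b + d)
      | _, _ => None
      end
  | Braid m n => Some (m + n, n + m)
  | BraidInv m n => Some (n + m, m + n)
  end.

Definition wt (t : term G) (m n : nat) : Prop := ty t = Some (m, n).

Inductive eqv (R : term G -> term G -> Prop) : term G -> term G -> Prop :=
| e_refl t : eqv R t t
| e_sym f g : eqv R f g -> eqv R g f
| e_trans f g h : eqv R f g -> eqv R g h -> eqv R f h
| e_comp f f' g g' : eqv R f f' -> eqv R g g' -> eqv R (Comp f g) (Comp f' g')
| e_tens f f' g g' : eqv R f f' -> eqv R g g' -> eqv R (Tens f g) (Tens f' g')
| e_rel f g : R f g -> eqv R f g
| e_idl f m n : wt f m n -> eqv R (Comp (Id n) f) f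
| e_idr f m n : wt f m n -> eqv R (Comp f (Id m)) f
| e_assoc f g h a b c d : wt h a b -> wt g b c -> wt f c d ->
    eqv R (Comp f (Comp g h)) (Comp (Comp f g) h)
| e_tassoc f g h a b c d e k : wt f a b -> wt g c d -> wt h e k ->
    eqv R (Tens (Tens f g) h) (Tens f (Tens g h))
| e_tunitl f a b : wt f a b -> eqv R (Tens (Id 0) f) f
| e_tunitr f a b : wt f a b -> eqv R (Tens f (Id 0)) f
| e_tid m n : eqv R (Tens (Id m) (Id n)) (Id (m + n))
| e_interchange f f' g g' a b c a' b' c' :
    wt g a b -> wt f b c -> wt g' a' b' -> wt f' b' c' ->
    eqv R (Comp (Tens f f') (Tens g g')) (Tens (Comp f g) (Comp f' g'))
| e_braid_nat f g a b c d : wt f a b -> wt g c d ->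
    eqv R (Comp (Braid b d) (Tens f g)) (Comp (Tens g f) (Braid a c))
| e_braid_inv1 m n : eqv R (Comp (BraidInv m n) (Braid m n)) (Id (m + n))
| e_braid_inv2 m n : eqv R (Comp (Braid m n) (BraidInv m n)) (Id (n + m))
| e_hex1 m n p : eqv R (Braid m (n + p))
    (Comp (Tens (Id n) (Braid m p)) (Tens (Braid m n) (Id p)))
| e_hex2 m n p : eqv R (Braid (m + n) p)
    (Comp (Tens (Braid m p) (Id n)) (Tens (Id m) (Braid n p))).

(* Coalgebra structure of C^{(x)n}, with C^{(x)(k+1)} = C (x) C^{(x)k}. *)
Fixpoint DeltaN (d : term G) (n : nat) : term G :=
  match n with
  | 0 => Id 0
  | S k => Comp (Tens (Tens (Id 1) (Braid 1 k)) (Id k)) (Tens d (DeltaN d k))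
  end.

Fixpoint EpsN (e : term G) (n : nat) : term G :=
  match n with
  | 0 => Id 0
  | S k => Tens e (EpsN e k)
  end.

(* Convolution composition and identity in End(n) = Hom(C^{(x)n}, 1). *)
Definition conv_comp (d : term G) (n : nat) (f g : term G) : term G :=
  Comp (Tens f g) (DeltaN d n).
Definition conv_id (e : term G) (n : nat) : term G := EpsN e n.

End Terms.

Fixpoint tmap (G H : Type) (phi : G -> H) (t : term G) : term H :=
  match t with
  | Gen g => Gen (phi g)
  | Id n => Id n
  | Comp f g => Comp (tmap phi f) (tmap phi g)
  | Tens f g => Tens (tmap phi f) (tmap phi g)
  | Braid m n => Braid m n
  | BraidInv m n => BraidInv m n
  end.

Inductive genD : Type :=
| gDelta | gEps | gOmega (plus : bool) | gTheta (plus : bool).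

Definition dcD (g : genD) : nat * nat :=
  match g with
  | gDelta => (1, 2) | gEps => (1, 0) | gOmega _ => (2, 0) | gTheta _ => (1, 0)
  end.

Notation DeltaD := (Gen gDelta).
Notation EpsD := (Gen gEps).

Inductive relD : term genD -> term genD -> Prop :=
| rD_coassoc : relD (Comp (Tens (Id 1) DeltaD) DeltaD) (Comp (Tens DeltaD (Id 1)) DeltaD)
| rD_counitr : relD (Comp (Tens (Id 1) EpsD) DeltaD) (Id 1)
| rD_counitl : relD (Comp (Tens EpsD (Id 1)) DeltaD) (Id 1).

Definition eqvD := eqv dcD relD.
Definition homD (n : nat) (f : term genD) := wt dcD f n 0.
Definition convD (n : nat) f g := conv_comp DeltaD n f g.
Definition convidD (n : nat) := conv_id EpsD n.

Inductive genDS : Type :=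
| gOld (g : genD) | gS | gSinv.

Definition dcDS (g : genDS) : nat * nat :=
  match g with gOld g => dcD g | gS => (1, 1) | gSinv => (1, 1) end.

Notation DeltaS := (Gen (gOld gDelta)).
Notation EpsS := (Gen (gOld gEps)).
Notation OmegaS b := (Gen (gOld (gOmega b))).
Notation ThetaS b := (Gen (gOld (gTheta b))).
Notation SS := (Gen gS).
Notation SSinv := (Gen gSinv).

Inductive relDS : term genDS -> term genDS -> Prop :=
| rS_coassoc : relDS (Comp (Tens (Id 1) DeltaS) DeltaS) (Comp (Tens DeltaS (Id 1)) DeltaS)
| rS_counitr : relDS (Comp (Tens (Id 1) EpsS) DeltaS) (Id 1)
| rS_counitl : relDS (Comp (Tens EpsS (Id 1)) DeltaS) (Id 1)
| rS_inv1 : relDS (Comp SS SSinv) (Id 1)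
| rS_inv2 : relDS (Comp SSinv SS) (Id 1)
| rS_delta : relDS (Comp DeltaS SS) (Comp (Tens SS SS) (Comp (Braid 1 1) DeltaS))
| rS_eps : relDS (Comp EpsS SS) EpsS
| rS_theta (b : bool) : relDS (Comp (ThetaS b) SS) (ThetaS b)
| rS_omega1 : relDS (Comp (OmegaS true) (Tens SS (Id 1))) (OmegaS false)
| rS_omega2 : relDS (Comp (OmegaS true) (Tens (Id 1) SS)) (OmegaS false)
| rS_omega3 : relDS (Comp (OmegaS true) (Tens SSinv (Id 1))) (Comp (OmegaS false) (Braid 1 1))
| rS_omega4 : relDS (Comp (OmegaS true) (Tens (Id 1) SSinv)) (Comp (OmegaS false) (Braid 1 1)).

Definition eqvS := eqv dcDS relDS.
Definition homS (n : nat) (f : term genDS) := wt dcDS f n 0.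
Definition convS (n : nat) f g := conv_comp DeltaS n f g.
Definition convidS (n : nat) := conv_id EpsS n.

Definition iota : term genD -> term genDS := tmap gOld.

(* iota is an isomorphism of categories: it has an inverse functor
   (identity on objects, given on representatives of hom-classes). *)
Definition iota_is_iso : Prop :=
  exists Ginv : nat -> term genDS -> term genD,
    (forall n f, homS n f -> homD n (Ginv n f)) /\
    (forall n f g, homS n f -> homS n g -> eqvS f g -> eqvD (Ginv n f) (Ginv n g)) /\
    (forall n, eqvD (Ginv n (convidS n)) (convidD n)) /\
    (forall n f g, homS n f -> homS n g ->
        eqvD (Ginv n (convS n f g)) (convD n (Ginv n f) (Ginv n g))) /\
    (forall n f, homD n f -> eqvD (Ginv n (iota f)) f) /\
    (forall n f, homS n f -> eqvS (iota (Ginv n f)) f).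

(* Main.v *)
Require Import Defs.
From Stdlib Require Import Arith ZArith List Lia Setoid Morphisms.
Import ListNotations.

#[global] Instance eqv_Equiv G dc R : Equivalence (@eqv G dc R).
Proof. split; [intro; apply e_refl | intros ??; apply e_sym | intros ???; apply e_trans]. Qed.
#[global] Instance Comp_Proper G dc R : Proper (eqv dc R ==> eqv dc R ==> eqv dc R) (@Comp G).
Proof. intros ?? H ?? H'; apply e_comp; auto. Qed.
#[global] Instance Tens_Proper G dc R : Proper (eqv dc R ==> eqv dc R ==> eqv dc R) (@Tens G).
Proof. intros ?? H ?? H'; apply e_tens; auto. Qed.

Ltac eqbs := repeat match goal with |- context [Nat.eqb ?x ?y] =>
   replace (Nat.eqb x y) with true by (symmetry; apply Nat.eqb_eq; lia) end.
Ltac tc := unfold wt in *; cbn [ty];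
  repeat match goal with H : ty _ ?f = Some _ |- context [ty _ ?f] => rewrite H end; simpl;
  eqbs; try reflexivity; try (f_equal; f_equal; lia).

Section Generic.
Context {G : Type} {dc : G -> nat * nat} {R : term G -> term G -> Prop}.
Local Notation "f == g" := (eqv dc R f g) (at level 70).
Local Notation wt := (wt dc).

Lemma wt_comp_inv f g n m : wt (Comp f g) n m -> exists p, wt g n p /\ wt f p m.
Proof.
  unfold wt; simpl. destruct (ty dc f) as [[a b]|]; destruct (ty dc g) as [[c d]|]; try discriminate.
  destruct (Nat.eqb_spec d a); intro H; inversion H; subst; eauto.
Qed.
Lemma wt_tens_inv f g n m : wt (Tens f g) n m ->
  exists a b c d, wt f a b /\ wt g c d /\ n = a + c /\ m = b + d.
Proof.
  unfold wt; simpl. destruct (ty dc f) as [[a b]|]; destruct (ty dc g) as [[c d]|]; try discriminate.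
  intro H; inversion H; subst; eauto 10.
Qed.
Lemma wt_comp f g n p m : wt g n p -> wt f p m -> wt (Comp f g) n m.
Proof. intros; tc. Qed.
Lemma wt_tens f g a b c d : wt f a b -> wt g c d -> wt (Tens f g) (a+c) (b+d).
Proof. intros; tc. Qed.
Lemma wt_fun f a b c d : wt f a b -> wt f c d -> a = c /\ b = d.
Proof. unfold wt; intros H1 H2; rewrite H1 in H2; inversion H2; auto. Qed.

Lemma idl f m n : wt f m n -> Comp (Id n) f == f.
Proof. intros; eapply e_idl; eauto. Qed.
Lemma idr f m n : wt f m n -> Comp f (Id m) == f.
Proof. intros; eapply e_idr; eauto. Qed.
Lemma assoc f g h a b c d : wt h a b -> wt g b c -> wt f c d ->
    Comp f (Comp g h) == Comp (Comp f g) h.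
Proof. intros; eapply e_assoc; eauto. Qed.
Lemma assoc' f g h a b c d : wt h a b -> wt g b c -> wt f c d ->
    Comp (Comp f g) h == Comp f (Comp g h).
Proof. intros; symmetry; eapply e_assoc; eauto. Qed.
Lemma interch f f' g g' a b c a' b' c' :
    wt g a b -> wt f b c -> wt g' a' b' -> wt f' b' c' ->
    Comp (Tens f f') (Tens g g') == Tens (Comp f g) (Comp f' g').
Proof. intros; eapply e_interchange; eauto. Qed.
Lemma bnat f g a b c d : wt f a b -> wt g c d ->
    Comp (Braid b d) (Tens f g) == Comp (Tens g f) (Braid a c).
Proof. intros; eapply e_braid_nat; eauto. Qed.

Lemma tid_eq m n k : k = m + n -> Tens (Id m) (Id n) == Id k.
Proof. intros ->; apply e_tid. Qed.

Lemma braid_idem_id (B Bi : term G) n :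
  Comp Bi B == Id n -> wt B n n -> wt Bi n n -> Comp B B == B -> B == Id n.
Proof.
  intros H1 HB HBi H2.
  symmetry. rewrite <- H1. rewrite <- H2 at 1.
  rewrite (assoc _ _ _ _ _ _ _ HB HB HBi). rewrite H1. eapply idl; eauto.
Qed.
Lemma braid0l n : Braid 0 n == Id n.
Proof.
  apply braid_idem_id with (Bi := BraidInv 0 n).
  - apply e_braid_inv1.
  - tc.
  - tc.
  - pose proof (e_hex2 dc R 0 0 n) as H. simpl in H.
    rewrite (e_tunitr R (f:=Braid 0 n) (a:=n) (b:=n) ltac:(tc)) in H.
    rewrite (e_tunitl R (f:=Braid 0 n) (a:=n) (b:=n) ltac:(tc)) in H.
    symmetry; exact H.
Qed.
Lemma braid0r n : Braid n 0 == Id n.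
Proof.
  replace n with (n + 0) at 2 by lia.
  apply braid_idem_id with (Bi := BraidInv n 0).
  - apply e_braid_inv1.
  - tc.
  - tc.
  - pose proof (e_hex1 dc R n 0 0) as H. simpl in H.
    rewrite (e_tunitr R (f:=Braid n 0) (a:=n+0) (b:=n) ltac:(tc)) in H.
    rewrite (e_tunitl R (f:=Braid n 0) (a:=n+0) (b:=n) ltac:(tc)) in H.
    symmetry; exact H.
Qed.

Ltac tcw := unfold wt in *; cbn [ty];
  repeat match goal with H : ty _ ?f = Some _ |- context [ty _ ?f] => rewrite H end; simpl;
  eqbs; discriminate.

Ltac ceq := repeat (match goal with |- context [Nat.eqb ?x ?y] => destruct (Nat.eqb_spec x y) end; simpl);
  try congruence; intros; subst.
Lemma A_r f g h : ty dc (Comp (Comp f g) h) <> None -> Comp (Comp f g) h == Comp f (Comp g h).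
Proof.
  simpl. destruct (ty dc f) as [[a b]|] eqn:Ef; destruct (ty dc g) as [[c d]|] eqn:Eg;
  destruct (ty dc h) as [[x y]|] eqn:Eh; simpl; try congruence.
  all: ceq; symmetry; eapply assoc; unfold wt; eauto.
Qed.
Lemma A_l f g h : ty dc (Comp (Comp f g) h) <> None -> Comp f (Comp g h) == Comp (Comp f g) h.
Proof. intros; symmetry; apply A_r; auto. Qed.
Lemma IdL n f : ty dc (Comp (Id n) f) <> None -> Comp (Id n) f == f.
Proof.
  simpl. destruct (ty dc f) as [[a b]|] eqn:Ef; simpl; try congruence.
  all: ceq; eapply idl; unfold wt; eauto.
Qed.
Lemma IdR n f : ty dc (Comp f (Id n)) <> None -> Comp f (Id n) == f.
Proof.
  simpl. destruct (ty dc f) as [[a b]|] eqn:Ef; simpl; try congruence.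
  all: ceq; eapply idr; unfold wt; eauto.
Qed.
Lemma IC f f' g g' : ty dc (Tens (Comp f g) (Comp f' g')) <> None ->
  Comp (Tens f f') (Tens g g') == Tens (Comp f g) (Comp f' g').
Proof.
  simpl. destruct (ty dc f) as [[a b]|] eqn:Ef; destruct (ty dc g) as [[c d]|] eqn:Eg;
  destruct (ty dc f') as [[a' b']|] eqn:Ef'; destruct (ty dc g') as [[c' d']|] eqn:Eg'; simpl; try congruence.
  all: ceq; eapply interch; unfold wt; eauto.
Qed.
Lemma IC' f f' g g' : ty dc (Tens (Comp f g) (Comp f' g')) <> None ->
  Tens (Comp f g) (Comp f' g') == Comp (Tens f f') (Tens g g').
Proof. intros; symmetry; apply IC; auto. Qed.
Lemma TUL f : ty dc f <> None -> Tens (Id 0) f == f.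
Proof. destruct (ty dc f) as [[a b]|] eqn:E; try congruence; intros; eapply e_tunitl; unfold wt; eauto. Qed.
Lemma TUR f : ty dc f <> None -> Tens f (Id 0) == f.
Proof. destruct (ty dc f) as [[a b]|] eqn:E; try congruence; intros; eapply e_tunitr; unfold wt; eauto. Qed.
Lemma TA f g h : ty dc (Tens (Tens f g) h) <> None -> Tens (Tens f g) h == Tens f (Tens g h).
Proof.
  simpl. destruct (ty dc f) as [[a b]|] eqn:Ef; destruct (ty dc g) as [[c d]|] eqn:Eg;
  destruct (ty dc h) as [[x y]|] eqn:Eh; simpl; try congruence.
  all: intros; eapply e_tassoc; unfold wt; eauto.
Qed.

Lemma binat f g a b c d : wt f a b -> wt g c d ->
    Comp (BraidInv b d) (Tens g f) == Comp (Tens f g) (BraidInv a c).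
Proof.
  intros Hf Hg.
  rewrite <- (IdR (c+a) (Tens g f)) by tcw.
  rewrite <- (e_braid_inv2 dc R a c).
  rewrite (A_l (Tens g f)) by tcw.
  rewrite <- (bnat _ _ _ _ _ _ Hf Hg).
  rewrite (A_r (Braid b d)) by tcw.
  rewrite (A_l (BraidInv b d)) by tcw.
  rewrite e_braid_inv1. rewrite IdL by tcw. reflexivity.
Qed.

Fixpoint pwn (u e : term G) (n : nat) : term G :=
  match n with 0 => e | S k => Comp u (pwn u e k) end.
Definition pw (u v e : term G) (z : Z) : term G :=
  match z with Z0 => e | Zpos p => pwn u e (Pos.to_nat p) | Zneg p => pwn v e (Pos.to_nat p) end.

Lemma pw_nat u v e m : pw u v e (Z.of_nat m) = pwn u e m.
Proof. destruct m; simpl; auto. rewrite SuccNat2Pos.id_succ. auto. Qed.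
Lemma pw_neg u v e m : pw u v e (- Z.of_nat m)%Z = pwn v e m.
Proof. destruct m; simpl; auto. rewrite SuccNat2Pos.id_succ. auto. Qed.
Lemma Z_cases z : (exists m, z = Z.of_nat m) \/ (exists m, z = - Z.of_nat (S m))%Z.
Proof.
  destruct (Z_le_gt_dec 0 z).
  - left; exists (Z.to_nat z); lia.
  - right; exists (Z.to_nat (- z) - 1)%nat; lia.
Qed.

Section Pow.
Variables (u v : term G) (k : nat).
Hypotheses (Hu : wt u k k) (Hv : wt v k k) (Huv : Comp u v == Id k) (Hvu : Comp v u == Id k).
Local Notation P := (pw u v (Id k)).
Lemma wt_pwn w n : wt w k k -> wt (pwn w (Id k) n) k k.
Proof. intros; induction n; simpl; tc. Qed.
Lemma wt_pw z : wt (P z) k k.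
Proof. destruct z; simpl; try apply wt_pwn; auto; tc. Qed.
Lemma pw_succ z : Comp u (P z) == P (z + 1).
Proof.
  destruct (Z_cases z) as [[m ->]|[m ->]].
  - replace (Z.of_nat m + 1)%Z with (Z.of_nat (S m)) by lia. rewrite !pw_nat. reflexivity.
  - replace (- Z.of_nat (S m) + 1)%Z with (- Z.of_nat m)%Z by lia. rewrite !pw_neg. simpl.
    pose proof (wt_pwn v m Hv).
    rewrite (A_l u) by tcw. rewrite Huv. rewrite IdL by tcw. reflexivity.
Qed.
Lemma pw_pred z : Comp v (P z) == P (z - 1).
Proof.
  destruct (Z_cases (z - 1)) as [[m E]|[m E]].
  - replace z with (Z.of_nat (S m)) by lia. replace (Z.of_nat (S m) - 1)%Z with (Z.of_nat m) by lia.
    rewrite !pw_nat. simpl. pose proof (wt_pwn u m Hu).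
    rewrite (A_l v) by tcw. rewrite Hvu. rewrite IdL by tcw. reflexivity.
  - rewrite E. replace z with (- Z.of_nat m)%Z by lia. rewrite !pw_neg. reflexivity.
Qed.
Lemma pw_eqz a b : a = b -> P a == P b.
Proof. intros ->; reflexivity. Qed.
Lemma pw_add a b : Comp (P a) (P b) == P (a + b).
Proof.
  pose proof (wt_pw b).
  destruct (Z_cases a) as [[m ->]|[m ->]].
  - rewrite pw_nat. induction m.
    + simpl. rewrite IdL by tcw. reflexivity.
    + change (pwn u (Id k) (S m)) with (Comp u (pwn u (Id k) m)).
      pose proof (wt_pwn u m Hu). rewrite A_r by tcw. rewrite IHm.
      rewrite pw_succ. apply pw_eqz; lia.
  - rewrite pw_neg. induction m.
    + simpl pwn. pose proof (wt_pwn v 0 Hv). rewrite A_r by tcw. rewrite IdL by tcw.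
      rewrite pw_pred. apply pw_eqz; lia.
    + change (pwn v (Id k) (S (S m))) with (Comp v (pwn v (Id k) (S m))).
      pose proof (wt_pwn v (S m) Hv). rewrite A_r by tcw. rewrite IHm.
      rewrite pw_pred. apply pw_eqz; lia.
Qed.
End Pow.
End Generic.

Ltac ceq := repeat (match goal with |- context [Nat.eqb ?x ?y] => destruct (Nat.eqb_spec x y) end; simpl);
  try congruence; intros; subst.
Ltac tcw := unfold wt in *; cbn [ty];
  repeat match goal with H : ty _ ?f = Some _ |- context [ty _ ?f] => rewrite H end; simpl;
  eqbs; discriminate.

Lemma zeven_nat m : Z.even (Z.of_nat m) = Nat.even m /\ Z.odd (Z.of_nat m) = Nat.odd m.
Proof.
  induction m; auto. rewrite Nat2Z.inj_succ, Z.even_succ, Z.odd_succ, Nat.even_succ, Nat.odd_succ.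
  tauto.
Qed.

Section Gen2.
Context {G : Type} {dc : G -> nat * nat} {R : term G -> term G -> Prop}.
Local Notation "f == g" := (eqv dc R f g) (at level 70).
Local Notation wt := (wt dc).
Local Notation c := (@Braid G 1 1).
Local Notation ci := (@BraidInv G 1 1).
Definition cpow (z : Z) : term G := pw c ci (Id 2) z.
Local Notation I1 := (@Id G 1).

Lemma wt_c : wt c 2 2. Proof. tc. Qed.
Lemma wt_ci : wt ci 2 2. Proof. tc. Qed.
Lemma c_ci : Comp c ci == Id 2. Proof. exact (e_braid_inv2 dc R 1 1). Qed.
Lemma ci_c : Comp ci c == Id 2. Proof. exact (e_braid_inv1 dc R 1 1). Qed.
Lemma wt_cpow z : wt (cpow z) 2 2.
Proof. apply wt_pw; [apply wt_c|apply wt_ci]. Qed.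
Lemma cpow_succ z : Comp c (cpow z) == cpow (z + 1).
Proof. apply pw_succ; auto using wt_c, wt_ci, c_ci, ci_c. Qed.
Lemma cpow_pred z : Comp ci (cpow z) == cpow (z - 1).
Proof. apply pw_pred; auto using wt_c, wt_ci, c_ci, ci_c. Qed.
Lemma cpow_add a b : Comp (cpow a) (cpow b) == cpow (a + b).
Proof. apply pw_add; auto using wt_c, wt_ci, c_ci, ci_c. Qed.

Lemma c_swap A B : wt A 1 1 -> wt B 1 1 -> Comp c (Tens A B) == Comp (Tens B A) c.
Proof. intros; eapply bnat; eauto. Qed.
Lemma ci_swap A B : wt A 1 1 -> wt B 1 1 -> Comp ci (Tens A B) == Comp (Tens B A) ci.
Proof. intros; eapply (binat B A 1 1 1 1); eauto. Qed.

Lemma pwn_swap w m : wt w 2 2 ->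
  (forall A B, wt A 1 1 -> wt B 1 1 -> Comp w (Tens A B) == Comp (Tens B A) w) ->
  forall A B, wt A 1 1 -> wt B 1 1 ->
  Comp (pwn w (Id 2) m) (Tens A B) ==
  Comp (if Nat.even m then Tens A B else Tens B A) (pwn w (Id 2) m).
Proof.
  intros Hw Hs. induction m; intros A B HA HB.
  - simpl. rewrite IdL by tcw. rewrite IdR by tcw. reflexivity.
  - change (pwn w (Id 2) (S m)) with (Comp w (pwn w (Id 2) m)).
    assert (HP : wt (pwn w (Id 2) m) 2 2) by (apply wt_pwn; auto).
    rewrite A_r by tcw. rewrite IHm by auto.
    rewrite Nat.even_succ, <- Nat.negb_even.
    destruct (Nat.even m); simpl.
    + rewrite A_l by tcw. rewrite Hs by auto. rewrite A_r by tcw. reflexivity.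
    + rewrite A_l by tcw. rewrite Hs by auto. rewrite A_r by tcw. reflexivity.
Qed.

Lemma cpow_swap j A B : wt A 1 1 -> wt B 1 1 ->
  Comp (cpow j) (Tens A B) == Comp (if Z.even j then Tens A B else Tens B A) (cpow j).
Proof.
  intros HA HB. unfold cpow.
  destruct (Z_cases j) as [[m ->]|[m ->]].
  - rewrite pw_nat. rewrite (proj1 (zeven_nat m)).
    apply pwn_swap; auto using wt_c, c_swap.
  - rewrite pw_neg. rewrite Z.even_opp, (proj1 (zeven_nat (S m))).
    apply pwn_swap; auto using wt_ci, ci_swap.
Qed.

Lemma TIC_r k f g a b d : wt g a b -> wt f b d ->
  Tens (Id k) (Comp f g) == Comp (Tens (Id k) f) (Tens (Id k) g).
Proof. intros. rewrite IC by tcw. rewrite IdL by tcw. reflexivity. Qed.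
Lemma TIC_l k f g a b d : wt g a b -> wt f b d ->
  Tens (Comp f g) (Id k) == Comp (Tens f (Id k)) (Tens g (Id k)).
Proof. intros. rewrite IC by tcw. rewrite IdL by tcw. reflexivity. Qed.

Local Notation s1 := (Tens c I1).
Local Notation s2 := (Tens I1 c).
Local Notation s1' := (Tens ci I1).
Local Notation s2' := (Tens I1 ci).

Lemma B21_eq : @Braid G 2 1 == Comp s1 s2.
Proof. exact (e_hex2 dc R 1 1 1). Qed.
Lemma B12_eq : @Braid G 1 2 == Comp s2 s1.
Proof. exact (e_hex1 dc R 1 1 1). Qed.
Lemma YB : Comp s2 (Comp s1 s2) == Comp s1 (Comp s2 s1).
Proof.
  pose proof (bnat (dc:=dc) (R:=R) I1 c 1 1 2 2 ltac:(tc) ltac:(tc)) as H.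
  rewrite B12_eq in H. rewrite A_r in H by tcw. exact H.
Qed.
Lemma s1s1' : Comp s1 s1' == Id 3.
Proof. rewrite IC by tcw. rewrite c_ci, IdL by tcw. apply e_tid. Qed.
Lemma s2s2' : Comp s2 s2' == Id 3.
Proof. rewrite IC by tcw. rewrite c_ci, IdL by tcw. apply e_tid. Qed.
Lemma inv_unique (B Bi X : term G) n : wt B n n -> wt Bi n n -> wt X n n ->
  Comp Bi B == Id n -> Comp B X == Id n -> Bi == X.
Proof.
  intros HB HBi HX H1 H2.
  rewrite <- (IdR n Bi) by tcw. rewrite <- H2. rewrite A_l by tcw. rewrite H1. apply IdL; tcw.
Qed.
Lemma BI12_eq : @BraidInv G 1 2 == Comp s1' s2'.
Proof.
  apply (inv_unique (Braid 1 2) _ _ 3); try tc.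
  - exact (e_braid_inv1 dc R 1 2).
  - rewrite B12_eq. rewrite A_r by tcw. rewrite (A_l s1) by tcw. rewrite s1s1'.
    rewrite IdL by tcw. apply s2s2'.
Qed.
Lemma BI21_eq : @BraidInv G 2 1 == Comp s2' s1'.
Proof.
  apply (inv_unique (Braid 2 1) _ _ 3); try tc.
  - exact (e_braid_inv1 dc R 2 1).
  - rewrite B21_eq. rewrite A_r by tcw. rewrite (A_l s2) by tcw. rewrite s2s2'.
    rewrite IdL by tcw. apply s1s1'.
Qed.
Lemma YBi : Comp s2' (Comp s1' s2') == Comp s1' (Comp s2' s1').
Proof.
  pose proof (binat (dc:=dc) (R:=R) I1 ci 1 1 2 2 ltac:(tc) ltac:(tc)) as H.
  rewrite BI12_eq in H. rewrite A_r in H by tcw. symmetry; exact H.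
Qed.

Definition CA (D : term G) := Comp (Tens I1 D) D == Comp (Tens D I1) D.
Lemma CA_c D : wt D 1 2 -> CA D -> CA (Comp c D).
Proof.
  unfold CA; intros HD H.
  rewrite (TIC_r 1 c D 1 2 2) by tc. rewrite (TIC_l 1 c D 1 2 2) by tc.
  rewrite (A_r (Tens I1 c)) by tcw. rewrite (A_l (Tens I1 D)) by tcw.
  rewrite <- (bnat D I1 1 2 1 1 HD ltac:(tc)).
  rewrite (A_r (Tens c I1)) by tcw. rewrite (A_l (Tens D I1)) by tcw.
  rewrite <- (bnat (dc:=dc) (R:=R) I1 D 1 1 1 2 ltac:(tc) HD).
  rewrite (A_r (Braid 2 1)) by tcw. rewrite (A_r (Braid 1 2)) by tcw.
  rewrite <- H.
  rewrite (A_l s2) by tcw. rewrite (A_l s1) by tcw.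
  rewrite B21_eq, B12_eq. rewrite (A_l s2) by tcw. rewrite (A_l s1 s2) by tcw.
  rewrite (A_r s2 s1 s2) by tcw. rewrite (A_r s1 s2 s1) by tcw. rewrite YB. reflexivity.
Qed.
Lemma CA_ci D : wt D 1 2 -> CA D -> CA (Comp ci D).
Proof.
  unfold CA; intros HD H.
  rewrite (TIC_r 1 ci D 1 2 2) by tc. rewrite (TIC_l 1 ci D 1 2 2) by tc.
  rewrite (A_r (Tens I1 ci)) by tcw. rewrite (A_l (Tens I1 D)) by tcw.
  rewrite <- (binat (dc:=dc) (R:=R) I1 D 1 1 1 2 ltac:(tc) HD).
  rewrite (A_r (Tens ci I1)) by tcw. rewrite (A_l (Tens D I1)) by tcw.
  rewrite <- (binat (dc:=dc) (R:=R) D I1 1 2 1 1 HD ltac:(tc)).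
  rewrite (A_r (BraidInv 1 2)) by tcw. rewrite (A_r (BraidInv 2 1)) by tcw.
  rewrite <- H.
  rewrite (A_l s2') by tcw. rewrite (A_l s1') by tcw.
  rewrite BI21_eq, BI12_eq. rewrite (A_l s2') by tcw.
  rewrite (A_r s2' s1' s2') by tcw. rewrite YBi. reflexivity.
Qed.

Lemma CA_proper X Y : X == Y -> CA X -> CA Y.
Proof. unfold CA; intros E H. rewrite <- E. exact H. Qed.

Lemma CA_cpow D z : wt D 1 2 -> CA D -> CA (Comp (cpow z) D).
Proof.
  intros HD H. unfold cpow.
  destruct (Z_cases z) as [[m ->]|[m ->]]; [rewrite pw_nat|rewrite pw_neg].
  - induction m.
    + simpl. eapply CA_proper; [|exact H]. symmetry; apply IdL; tcw.
    + change (pwn c (Id 2) (S m)) with (Comp c (pwn c (Id 2) m)).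
      assert (HP : wt (pwn c (Id 2) m) 2 2) by (apply wt_pwn; tc).
      eapply CA_proper; [symmetry; apply A_r; tcw|]. apply CA_c; auto. tc.
  - induction (S m) as [|k IH].
    + simpl. eapply CA_proper; [|exact H]. symmetry; apply IdL; tcw.
    + change (pwn ci (Id 2) (S k)) with (Comp ci (pwn ci (Id 2) k)).
      assert (HP : wt (pwn ci (Id 2) k) 2 2) by (apply wt_pwn; tc).
      eapply CA_proper; [symmetry; apply A_r; tcw|]. apply CA_ci; auto. tc.
Qed.

Lemma Bi_id m n k : @Braid G m n == Id k -> k = m + n -> n + m = k -> @BraidInv G m n == Id k.
Proof.
  intros H E1 E2. subst k.
  transitivity (Comp (@BraidInv G m n) (Braid m n)).
  - rewrite H. symmetry; apply IdR; tcw.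
  - apply e_braid_inv1.
Qed.

Definition CU (e D : term G) := Comp (Tens I1 e) D == I1 /\ Comp (Tens e I1) D == I1.
Lemma CU_proper e X Y : X == Y -> CU e X -> CU e Y.
Proof. unfold CU; intros E H. rewrite <- E. exact H. Qed.
Lemma CU_c e D : wt e 1 0 -> wt D 1 2 -> CU e D -> CU e (Comp c D).
Proof.
  unfold CU; intros He HD [H1 H2].
  assert (E1 : Comp (Tens I1 e) c == Tens e I1).
  { rewrite <- (bnat (dc:=dc) (R:=R) e I1 1 0 1 1 He ltac:(tc)). rewrite braid0l. apply IdL; tcw. }
  assert (E2 : Comp (Tens e I1) c == Tens I1 e).
  { rewrite <- (bnat (dc:=dc) (R:=R) I1 e 1 1 1 0 ltac:(tc) He). rewrite braid0r. apply IdL; tcw. }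
  split; rewrite A_l by tcw; [rewrite E1|rewrite E2]; auto.
Qed.
Lemma CU_ci e D : wt e 1 0 -> wt D 1 2 -> CU e D -> CU e (Comp ci D).
Proof.
  unfold CU; intros He HD [H1 H2].
  assert (E1 : Comp (Tens I1 e) ci == Tens e I1).
  { rewrite <- (binat (dc:=dc) (R:=R) I1 e 1 1 1 0 ltac:(tc) He).
    rewrite (Bi_id 1 0 1) by (auto; apply braid0r). apply IdL; tcw. }
  assert (E2 : Comp (Tens e I1) ci == Tens I1 e).
  { rewrite <- (binat (dc:=dc) (R:=R) e I1 1 0 1 1 He ltac:(tc)).
    rewrite (Bi_id 0 1 1) by (auto; apply braid0l). apply IdL; tcw. }
  split; rewrite A_l by tcw; [rewrite E1|rewrite E2]; auto.
Qed.
Lemma CU_cpow e D z : wt e 1 0 -> wt D 1 2 -> CU e D -> CU e (Comp (cpow z) D).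
Proof.
  intros He HD H. unfold cpow.
  destruct (Z_cases z) as [[m ->]|[m ->]]; [rewrite pw_nat|rewrite pw_neg].
  - induction m.
    + simpl. eapply CU_proper; [|exact H]. symmetry; apply IdL; tcw.
    + change (pwn c (Id 2) (S m)) with (Comp c (pwn c (Id 2) m)).
      assert (HP : wt (pwn c (Id 2) m) 2 2) by (apply wt_pwn; tc).
      eapply CU_proper; [symmetry; apply A_r; tcw|]. apply CU_c; auto. tc.
  - induction (S m) as [|k IH].
    + simpl. eapply CU_proper; [|exact H]. symmetry; apply IdL; tcw.
    + change (pwn ci (Id 2) (S k)) with (Comp ci (pwn ci (Id 2) k)).
      assert (HP : wt (pwn ci (Id 2) k) 2 2) by (apply wt_pwn; tc).
      eapply CU_proper; [symmetry; apply A_r; tcw|]. apply CU_ci; auto. tc.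
Qed.
End Gen2.

Ltac ceq ::= repeat (match goal with |- context [Nat.eqb ?x ?y] => destruct (Nat.eqb_spec x y) end; simpl);
  try congruence; intros; subst.
Ltac tcw ::= unfold wt in *; cbn [ty];
  repeat match goal with H : ty _ ?f = Some _ |- context [ty _ ?f] => rewrite H end; simpl;
  eqbs; discriminate.

Lemma eqv_ty {G} {dc : G -> nat * nat} {R} : (forall f g, R f g -> ty dc f = ty dc g) ->
  forall f g, eqv dc R f g -> ty dc f = ty dc g.
Proof.
  intros HR f g H; induction H; try (unfold wt in *; simpl; repeat match goal with H : ty _ ?f = Some _ |- context [ty _ ?f] => rewrite H end; simpl; eqbs; try reflexivity; f_equal; f_equal; lia).
  - congruence.
  - congruence.
  - simpl; rewrite IHeqv1, IHeqv2; auto.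
  - simpl; rewrite IHeqv1, IHeqv2; auto.
  - auto.
Qed.

Lemma relD_ty f g : relD f g -> ty dcD f = ty dcD g.
Proof. destruct 1; reflexivity. Qed.
Lemma relDS_ty f g : relDS f g -> ty dcDS f = ty dcDS g.
Proof. destruct 1; reflexivity. Qed.
Lemma eqvD_ty f g : eqvD f g -> ty dcD f = ty dcD g.
Proof. apply eqv_ty, relD_ty. Qed.
Lemma eqvS_ty f g : eqvS f g -> ty dcDS f = ty dcDS g.
Proof. apply eqv_ty, relDS_ty. Qed.

Definition src {G} (dc : G -> nat * nat) (f : term G) : nat :=
  match ty dc f with Some (a, _) => a | None => 0 end.
Arguments src : simpl never.
Lemma src_wt {G} {dc : G -> nat*nat} f a b : wt dc f a b -> src dc f = a.
Proof. unfold src, wt; intros ->; auto. Qed.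

Definition Wt (t : Z) : term genD := Comp (Gen (gOmega (Z.even t))) (cpow (- (t / 2))).

Fixpoint push (g : term genD) (k : list Z) : term genD * list Z :=
  match g with
  | Gen gDelta => let a := hd 0%Z k in (Comp (cpow a) (Gen gDelta), [a; a])
  | Gen gEps => (Gen gEps, [])
  | Gen (gTheta b) => (Gen (gTheta b), [])
  | Gen (gOmega b) => (Wt (nth 0 k 0 + nth 1 k 0 + (if b then 0 else 1))%Z, [])
  | Id n => (Id n, k)
  | Comp f h => let p := push h k in let q := push f (snd p) in (Comp (fst q) (fst p), snd q)
  | Tens f h => let a := src dcD f in let p := push f (firstn a k) in let q := push h (skipn a k) in
      (Tens (fst p) (fst q), snd p ++ snd q)
  | Braid m n => (Braid m n, skipn m k ++ firstn m k)
  | BraidInv m n => (BraidInv m n, skipn n k ++ firstn n k)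
  end.

Lemma cpow_ty {G} {dc : G -> nat*nat} z : ty dc (cpow z) = Some (2,2).
Proof. apply wt_cpow. Qed.
Lemma push_ty g k : ty dcD (fst (push g k)) = ty dcD g.
Proof.
  revert k; induction g; intro k; simpl; auto.
  - destruct g; simpl; auto.
    + rewrite cpow_ty. reflexivity.
    + unfold Wt. cbn [ty]. rewrite cpow_ty. reflexivity.
  - rewrite IHg1, IHg2. reflexivity.
  - rewrite IHg1, IHg2. reflexivity.
Qed.
Lemma push_wt g k n m : wt dcD g n m -> wt dcD (fst (push g k)) n m.
Proof. unfold wt; rewrite push_ty; auto. Qed.

Lemma firstn_app_l {A} (l1 l2 : list A) n : length l1 = n -> firstn n (l1 ++ l2) = l1.
Proof. intros <-. rewrite firstn_app, Nat.sub_diag, firstn_O, app_nil_r, firstn_all. auto. Qed.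
Lemma skipn_app_l {A} (l1 l2 : list A) n : length l1 = n -> skipn n (l1 ++ l2) = l2.
Proof. intros <-. rewrite skipn_app, Nat.sub_diag, skipn_O, skipn_all. auto. Qed.

Lemma push_len g : forall k n m, wt dcD g n m -> length k = n -> length (snd (push g k)) = m.
Proof.
  induction g; intros k n0 m0 H L; simpl.
  - destruct g; unfold wt in H; simpl in H; inversion H; subst; simpl; auto.
  - unfold wt in H; simpl in H; inversion H; subst; auto.
  - apply wt_comp_inv in H as [p [H1 H2]]. eauto.
  - apply wt_tens_inv in H as [a [b [c [d [H1 [H2 [-> ->]]]]]]].
    rewrite (src_wt _ _ _ H1). rewrite length_app.
    erewrite IHg1, IHg2; eauto. rewrite length_skipn; lia. rewrite length_firstn; lia.
  - unfold wt in H; simpl in H; inversion H; subst. rewrite length_app, length_skipn, length_firstn. lia.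
  - unfold wt in H; simpl in H; inversion H; subst. rewrite length_app, length_skipn, length_firstn. lia.
Qed.

Definition Rel (p q : term genD * list Z) := eqvD (fst p) (fst q) /\ snd p = snd q.
Lemma Rel_refl p : Rel p p. Proof. split; reflexivity. Qed.
Lemma Rel_sym p q : Rel p q -> Rel q p. Proof. intros [H1 H2]; split; symmetry; auto. Qed.
Lemma Rel_trans p q r : Rel p q -> Rel q r -> Rel p r.
Proof. intros [H1 H2] [H3 H4]; split; [rewrite H1; auto | congruence]. Qed.

Lemma split_list {A} (k : list A) a c : length k = a + c ->
  exists l1 l2, k = l1 ++ l2 /\ length l1 = a /\ length l2 = c.
Proof.
  intro L. exists (firstn a k), (skipn a k). rewrite firstn_skipn, length_firstn, length_skipn. split; auto; lia.
Qed.

Ltac wtinv := repeat match goal with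
  | H : wt _ (Comp _ _) _ _ |- _ => apply wt_comp_inv in H as [? [? ?]]
  | H : wt _ (Tens _ _) _ _ |- _ => apply wt_tens_inv in H as [? [? [? [? [? [? [? ?]]]]]]]
  end.
Ltac wtfun := repeat match goal with
  | H1 : wt ?dc ?f ?a ?b, H2 : wt ?dc ?f ?c ?d |- _ =>
      let E1 := fresh in let E2 := fresh in
      destruct (wt_fun _ _ _ _ _ H1 H2) as [E1 E2]; clear H2; subst
  end.

Lemma wt_Id {G} {dc : G -> nat * nat} n a b : wt dc (Id n) a b -> a = n /\ b = n.
Proof. unfold wt; simpl; intro H; inversion H; auto. Qed.
Lemma wt_Braid {G} {dc : G -> nat * nat} m n a b : wt dc (Braid m n) a b -> a = m + n /\ b = n + m.
Proof. unfold wt; simpl; intro H; inversion H; auto. Qed.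
Lemma wt_BraidInv {G} {dc : G -> nat * nat} m n a b : wt dc (BraidInv m n) a b -> a = n + m /\ b = m + n.
Proof. unfold wt; simpl; intro H; inversion H; auto. Qed.

Ltac tcw' := unfold wt in *; cbn [ty]; rewrite ?push_ty;
  repeat match goal with H : ty _ ?f = Some _ |- context [ty _ ?f] => rewrite H end; simpl;
  eqbs; discriminate.

Lemma push_eqv_aux g h : eqvD g h -> forall n m k, wt dcD g n m -> length k = n -> Rel (push g k) (push h k).
Proof.
  unfold eqvD. induction 1; intros n0 m0 kk Hw L.
  - apply Rel_refl.
  - apply Rel_sym. apply (IHeqv n0 m0); auto. unfold wt in *. rewrite (eqvD_ty _ _ H). auto.
  - eapply Rel_trans; [apply (IHeqv1 n0 m0)|apply (IHeqv2 n0 m0)]; auto.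
    unfold wt in *. rewrite <- (eqvD_ty _ _ H). auto.
  -
    apply wt_comp_inv in Hw as [p [Hg Hf]]. simpl.
    destruct (IHeqv2 n0 p kk) as [E1 E2]; auto.
    destruct (IHeqv1 p m0 (snd (push g kk))) as [E3 E4]; auto.
    { eapply push_len; eauto. }
    rewrite <- E2. split; simpl; [rewrite E1, E3; reflexivity | auto].
  -
    apply wt_tens_inv in Hw as [a [b [c [d [Hf [Hg [-> ->]]]]]]].
    assert (Hf' : wt dcD f' a b) by (unfold wt in *; rewrite <- (eqvD_ty _ _ H); auto).
    simpl. rewrite (src_wt _ _ _ Hf), (src_wt _ _ _ Hf').
    destruct (IHeqv1 a b (firstn a kk)) as [E1 E2]; auto. { rewrite length_firstn; lia. }
    destruct (IHeqv2 c d (skipn a kk)) as [E3 E4]; auto. { rewrite length_skipn; lia. }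
    split; simpl; [rewrite E1, E3; reflexivity | congruence].
  -
    destruct H; unfold wt in Hw; simpl in Hw; injection Hw as <- <-;
    (destruct kk as [|x [|y kk]]; simpl in L; try lia); unfold src; simpl;
    split; simpl; auto.
    + apply CA_cpow. tc. apply e_rel; constructor.
    + apply (CU_cpow (Gen gEps)); [tc|tc|split; apply e_rel; constructor].
    + apply (CU_cpow (Gen gEps)); [tc|tc|split; apply e_rel; constructor].
  -
    simpl. split; simpl; auto. apply IdL. tcw'.
  -
    simpl. split; simpl; auto. apply IdR. tcw'.
  -
    simpl. split; simpl; auto. apply A_l. tcw'.
  -
    assert (Hfg : wt dcD (Tens f g) (a + c) (b + d)) by tc.
    unfold wt in Hw; simpl in Hw; rewrite H, H0, H1 in Hw; simpl in Hw; inversion Hw; subst.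
    destruct (split_list kk (a + c) e) as [AB [C [-> [LAB LC]]]]; auto.
    destruct (split_list AB a c) as [A [B [-> [LA LB]]]]; auto.
    simpl. rewrite (src_wt _ _ _ Hfg), (src_wt _ _ _ H).
    rewrite (src_wt _ _ _ H0).
    rewrite (firstn_app_l (A++B) C (a+c)), (skipn_app_l (A++B) C (a+c)) by (rewrite length_app; lia).
    rewrite (firstn_app_l A B a), (skipn_app_l A B a) by lia.
    rewrite <- (app_assoc A B C). rewrite (firstn_app_l A (B++C) a), (skipn_app_l A (B++C) a) by lia.
    rewrite (firstn_app_l B C c), (skipn_app_l B C c) by lia.
    split; simpl; [apply TA; tcw' | rewrite app_assoc; auto].
  -
    simpl. try (unfold src; simpl). split; simpl; auto. apply TUL. rewrite push_ty. unfold wt in *; congruence.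
  -
    unfold wt in Hw; simpl in Hw; rewrite H in Hw; simpl in Hw; inversion Hw; subst.
    simpl. rewrite (src_wt _ _ _ H). rewrite firstn_all2 by lia. rewrite skipn_all2 by lia.
    split; simpl; [apply TUR; rewrite push_ty; unfold wt in *; congruence | apply app_nil_r].
  -
    simpl. try (unfold src; simpl). split; simpl; [apply e_tid | apply firstn_skipn].
  -
    assert (Hfg : wt dcD (Comp f g) a c) by tc.
    unfold wt in Hw; simpl in Hw; rewrite H, H0, H1, H2 in Hw; simpl in Hw; rewrite !Nat.eqb_refl in Hw; inversion Hw; subst.
    destruct (split_list kk a a') as [A [B [-> [LA LB]]]]; auto.
    simpl. rewrite (src_wt _ _ _ Hfg), (src_wt _ _ _ H), (src_wt _ _ _ H0).
    rewrite (firstn_app_l A B a), (skipn_app_l A B a) by lia.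
    assert (L1 : length (snd (push g A)) = b) by (eapply push_len; eauto).
    rewrite firstn_app_l, skipn_app_l by lia.
    split; simpl; auto. apply IC. tcw'.
  -
    unfold wt in Hw; simpl in Hw; rewrite H, H0 in Hw; simpl in Hw; rewrite !Nat.eqb_refl in Hw; inversion Hw; subst.
    destruct (split_list kk a c) as [A [B [-> [LA LB]]]]; auto.
    simpl. rewrite (src_wt _ _ _ H), (src_wt _ _ _ H0).
    rewrite (firstn_app_l A B a), (skipn_app_l A B a) by lia.
    rewrite (firstn_app_l B A c), (skipn_app_l B A c) by lia.
    assert (L1 : length (snd (push f A)) = b) by (eapply push_len; eauto).
    rewrite firstn_app_l, skipn_app_l by lia.
    split; simpl; auto. apply bnat; apply push_wt; auto.
  -
    unfold wt in Hw; simpl in Hw; rewrite !Nat.eqb_refl in Hw; inversion Hw; subst.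
    destruct (split_list kk m n) as [A [B [-> [LA LB]]]]; auto.
    simpl. rewrite (firstn_app_l A B m), (skipn_app_l A B m) by lia.
    rewrite (firstn_app_l B A n), (skipn_app_l B A n) by lia.
    split; simpl; auto. apply e_braid_inv1.
  -
    unfold wt in Hw; simpl in Hw; rewrite !Nat.eqb_refl in Hw; inversion Hw; subst.
    destruct (split_list kk n m) as [A [B [-> [LA LB]]]]; auto.
    simpl. rewrite (firstn_app_l A B n), (skipn_app_l A B n) by lia.
    rewrite (firstn_app_l B A m), (skipn_app_l B A m) by lia.
    split; simpl; auto. apply e_braid_inv2.
  -
    unfold wt in Hw; simpl in Hw; inversion Hw; subst.
    destruct (split_list kk m (n + p)) as [A [BC [-> [LA LBC]]]]; auto.
    destruct (split_list BC n p) as [B [C [-> [LB LC]]]]; auto.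
    simpl. unfold src; simpl.
    rewrite (firstn_app_l A (B++C) m), (skipn_app_l A (B++C) m) by lia.
    rewrite (app_assoc A B C). rewrite (firstn_app_l (A++B) C (m+n)), (skipn_app_l (A++B) C (m+n)) by (rewrite length_app; lia).
    rewrite (firstn_app_l A B m), (skipn_app_l A B m) by lia.
    rewrite <- (app_assoc B A C). rewrite (firstn_app_l B (A++C) n), (skipn_app_l B (A++C) n) by lia.
    rewrite (firstn_app_l A C m), (skipn_app_l A C m) by lia.
    split; simpl; [apply e_hex1 | rewrite <- !app_assoc; auto].
  -
    unfold wt in Hw; simpl in Hw; inversion Hw; subst.
    destruct (split_list kk (m + n) p) as [AB [C [-> [LAB LC]]]]; auto.
    destruct (split_list AB m n) as [A [B [-> [LA LB]]]]; auto.
    simpl. unfold src; simpl.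
    rewrite (firstn_app_l (A++B) C (m+n)), (skipn_app_l (A++B) C (m+n)) by (rewrite length_app; lia).
    rewrite <- (app_assoc A B C). rewrite (firstn_app_l A (B++C) m), (skipn_app_l A (B++C) m) by lia.
    rewrite (firstn_app_l B C n), (skipn_app_l B C n) by lia.
    rewrite (app_assoc A C B). rewrite (firstn_app_l (A++C) B (m+p)), (skipn_app_l (A++C) B (m+p)) by (rewrite length_app; lia).
    rewrite (firstn_app_l A C m), (skipn_app_l A C m) by lia.
    split; simpl; [apply e_hex2 | rewrite <- !app_assoc; auto].
Qed.

Ltac tcw' ::= unfold wt in *; cbn [ty]; rewrite ?push_ty, ?cpow_ty;
  repeat match goal with H : ty _ ?f = Some _ |- context [ty _ ?f] => rewrite H end; simpl;
  eqbs; discriminate.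

Definition zeros n : list Z := repeat 0%Z n.
Fixpoint vadd (a b : list Z) : list Z :=
  match a, b with x :: a', y :: b' => (x + y)%Z :: vadd a' b' | _, _ => [] end.

Lemma vadd_firstn n a b : firstn n (vadd a b) = vadd (firstn n a) (firstn n b).
Proof. revert a b; induction n; intros [|x a] [|y b]; simpl; auto. f_equal; auto. Qed.
Lemma vadd_skipn n a b : skipn n (vadd a b) = vadd (skipn n a) (skipn n b).
Proof.
  revert a b; induction n; intros [|x a] [|y b]; simpl; auto.
  destruct (skipn n a); auto.
Qed.
Lemma vadd_app a1 a2 b1 b2 : length a1 = length b1 -> vadd (a1 ++ a2) (b1 ++ b2) = vadd a1 b1 ++ vadd a2 b2.
Proof. revert b1; induction a1; intros [|y b1]; simpl; intros; try discriminate; auto. f_equal; auto. Qed.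
Lemma vadd_len a b : length (vadd a b) = min (length a) (length b).
Proof. revert b; induction a; intros [|y b]; simpl; auto. Qed.
Lemma vadd_zeros_l a : vadd (zeros (length a)) a = a.
Proof. induction a; simpl; auto. unfold zeros in *; simpl; rewrite IHa; auto. Qed.
Lemma vadd_zeros_r a : vadd a (zeros (length a)) = a.
Proof. induction a; simpl; auto. unfold zeros in *; simpl; rewrite IHa, Z.add_0_r; auto. Qed.
Lemma vadd_assoc a b c : vadd a (vadd b c) = vadd (vadd a b) c.
Proof. revert b c; induction a; intros [|y b] [|z c]; simpl; auto. rewrite IHa, Z.add_assoc; auto. Qed.
Lemma zeros_app m n : zeros (m + n) = zeros m ++ zeros n.
Proof. apply repeat_app. Qed.
Lemma zeros_len n : length (zeros n) = n.
Proof. apply repeat_length. Qed.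

Lemma cpow0 {G} : @cpow G 0 = Id 2. Proof. reflexivity. Qed.

Lemma push_zero g : forall n m, wt dcD g n m -> Rel (push g (zeros n)) (g, zeros m).
Proof.
  induction g; intros n0 m0 H.
  - destruct g; unfold wt in H; simpl in H; injection H as <- <-; split; simpl; auto.
    + apply IdL; tcw'.
    + reflexivity.
    + destruct plus; unfold Wt; simpl; apply IdR; tcw'.
    + reflexivity.
  - unfold wt in H; simpl in H; injection H as <- <-; split; simpl; auto; reflexivity.
  - apply wt_comp_inv in H as [p [H1 H2]]. simpl.
    destruct (IHg2 _ _ H1) as [E1 E2]. rewrite E2.
    destruct (IHg1 _ _ H2) as [E3 E4]. split; simpl; auto. rewrite E1, E3; reflexivity.
  - apply wt_tens_inv in H as [a [b [c [d [H1 [H2 [-> ->]]]]]]]. simpl.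
    rewrite (src_wt _ _ _ H1). rewrite zeros_app.
    rewrite firstn_app_l, skipn_app_l by apply zeros_len.
    destruct (IHg1 _ _ H1) as [E1 E2]. destruct (IHg2 _ _ H2) as [E3 E4].
    split; simpl; [rewrite E1, E3; reflexivity | rewrite E2, E4, zeros_app; auto].
  - unfold wt in H; simpl in H; injection H as <- <-. split; simpl; [reflexivity|].
    rewrite zeros_app, firstn_app_l, skipn_app_l by apply zeros_len. rewrite <- zeros_app. f_equal; lia.
  - unfold wt in H; simpl in H; injection H as <- <-. split; simpl; [reflexivity|].
    rewrite zeros_app, firstn_app_l, skipn_app_l by apply zeros_len. rewrite <- zeros_app. f_equal; lia.
Qed.

Lemma push_pwn_gen (w : term genD) m y1 y2 :
  (forall u v, push w [u; v] = (w, [v; u])) ->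
  fst (push (pwn w (Id 2) m) [y1; y2]) = pwn w (Id 2) m /\
  (snd (push (pwn w (Id 2) m) [y1; y2]) = [y1; y2] \/ snd (push (pwn w (Id 2) m) [y1; y2]) = [y2; y1]).
Proof.
  intro Hw. induction m; simpl; auto.
  destruct IHm as [E1 [E2|E2]]; rewrite E1, E2, Hw; simpl; auto.
Qed.
Lemma push_cpow z y1 y2 :
  fst (push (cpow z) [y1; y2]) = cpow z /\
  (snd (push (cpow z) [y1; y2]) = [y1; y2] \/ snd (push (cpow z) [y1; y2]) = [y2; y1]).
Proof.
  unfold cpow, pw. destruct z; simpl; auto; apply push_pwn_gen; reflexivity.
Qed.
Lemma push_cpow_same z y : push (cpow z) [y; y] = (cpow z, [y; y]).
Proof.
  destruct (push_cpow z y y) as [E1 E2]. destruct (push (cpow z) [y;y]); simpl in *; subst.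
  destruct E2; subst; auto.
Qed.

Lemma Wt_split x y :
  eqvD (Wt (x + y)) (Comp (Wt (y + (if Z.even x then 0 else 1))) (cpow (- (x / 2)))).
Proof.
  unfold Wt. rewrite A_r by (cbn [ty]; rewrite !cpow_ty; simpl; discriminate).
  rewrite cpow_add.
  destruct (Z.Even_or_Odd x) as [[q ->]|[q ->]].
  - rewrite Z.even_even. rewrite Z.add_0_r.
    replace (2 * q + y)%Z with (q * 2 + y)%Z by lia.
    replace (2 * q)%Z with (q * 2 + 0)%Z by lia.
    rewrite !Z.div_add_l by lia. rewrite Z.even_add, Z.add_0_r.
    replace (Z.even (q * 2)) with true by (rewrite Z.mul_comm, Z.even_even; auto).
    simpl. replace (- (q + y / 2))%Z with (- (y / 2) + - q)%Z by lia.
    destruct (Z.even y); reflexivity.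
  - replace (Z.even (2 * q + 1)) with false by (rewrite Z.even_add, Z.even_even; auto).
    replace (2 * q + 1 + y)%Z with (q * 2 + (y + 1))%Z by lia.
    replace (2 * q + 1)%Z with (q * 2 + 1)%Z by lia.
    rewrite !Z.div_add_l by lia.
    replace (Z.even (q * 2 + (y + 1))) with (Z.even (y + 1))
      by (rewrite (Z.even_add (q * 2)); replace (Z.even (q * 2)) with true by (rewrite Z.mul_comm; symmetry; apply Z.even_even);
          destruct (Z.even (y+1)); auto).
    replace (1 / 2)%Z with 0%Z by reflexivity. rewrite Z.add_0_r. replace (- (q + (y + 1) / 2))%Z with (- ((y + 1) / 2) + - q)%Z by lia.
    reflexivity.
Qed.

Lemma length1 (l : list Z) : length l = 1 -> exists x, l = [x].
Proof. destruct l as [|x [|]]; simpl; intros; try lia; eauto. Qed.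
Lemma length2 (l : list Z) : length l = 2 -> exists x y, l = [x; y].
Proof. destruct l as [|x [|y [|]]]; simpl; intros; try lia; eauto. Qed.

Lemma push_act g : forall n m a b, wt dcD g n m -> length a = n -> length b = n ->
  Rel (push g (vadd a b))
      (fst (push (fst (push g a)) b), vadd (snd (push g a)) (snd (push (fst (push g a)) b))).
Proof.
  induction g; intros n0 m0 a b H La Lb.
  - destruct g; unfold wt in H; simpl in H; injection H as <- <-.
    + destruct (length1 a La) as [x ->]. destruct (length1 b Lb) as [y ->].
      simpl. rewrite push_cpow_same. split; simpl; auto.
      rewrite A_l by tcw'. rewrite cpow_add. reflexivity.
    + split; simpl; reflexivity.
    + destruct (length2 a La) as [x1 [x2 ->]]. destruct (length2 b Lb) as [y1 [y2 ->]].
      simpl. unfold Wt at 2. simpl.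
      destruct (push_cpow (- ((x1 + x2 + (if plus then 0 else 1)) / 2)) y1 y2) as [E1 [E2|E2]];
      rewrite E1, E2; split; simpl; auto.
      * set (tx := (x1 + x2 + (if plus then 0 else 1))%Z).
        replace (x1 + y1 + (x2 + y2) + (if plus then 0 else 1))%Z with (tx + (y1 + y2))%Z by (unfold tx; lia).
        apply Wt_split.
      * set (tx := (x1 + x2 + (if plus then 0 else 1))%Z).
        replace (x1 + y1 + (x2 + y2) + (if plus then 0 else 1))%Z with (tx + (y2 + y1))%Z by (unfold tx; lia).
        apply Wt_split.
    + split; simpl; reflexivity.
  - unfold wt in H; simpl in H; injection H as <- <-. split; simpl; reflexivity.
  - apply wt_comp_inv in H as [p [H1 H2]].
    destruct (IHg2 _ _ _ _ H1 La Lb) as [E1 E2].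
    simpl. rewrite E2.
    assert (L1 : length (snd (push g2 a)) = p) by (eapply push_len; eauto).
    assert (L2 : length (snd (push (fst (push g2 a)) b)) = p) by (eapply push_len; eauto using push_wt).
    destruct (IHg1 _ _ _ _ H2 L1 L2) as [E3 E4].
    split; simpl; [rewrite E1, E3; reflexivity | auto].
  - apply wt_tens_inv in H as [a0 [b0 [c0 [d0 [H1 [H2 [-> ->]]]]]]].
    simpl. rewrite (src_wt _ _ _ H1).
    assert (Hf' : wt dcD (fst (push g1 (firstn a0 a))) a0 b0) by (apply push_wt; auto).
    rewrite (src_wt _ _ _ Hf').
    rewrite vadd_firstn, vadd_skipn.
    assert (La1 : length (firstn a0 a) = a0) by (rewrite length_firstn; lia).
    assert (Lb1 : length (firstn a0 b) = a0) by (rewrite length_firstn; lia).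
    assert (La2 : length (skipn a0 a) = c0) by (rewrite length_skipn; lia).
    assert (Lb2 : length (skipn a0 b) = c0) by (rewrite length_skipn; lia).
    destruct (IHg1 _ _ _ _ H1 La1 Lb1) as [E1 E2].
    destruct (IHg2 _ _ _ _ H2 La2 Lb2) as [E3 E4].
    split; simpl; [rewrite E1, E3; reflexivity|].
    rewrite E2, E4. rewrite vadd_app; auto.
    rewrite (push_len _ _ _ _ H1 La1). rewrite (push_len _ _ _ _ Hf' Lb1). auto.
  - unfold wt in H; simpl in H; injection H as <- <-. split; simpl; [reflexivity|].
    rewrite vadd_app by (rewrite !length_skipn; lia). rewrite vadd_firstn, vadd_skipn. auto.
  - unfold wt in H; simpl in H; injection H as <- <-. split; simpl; [reflexivity|].
    rewrite vadd_app by (rewrite !length_skipn; lia). rewrite vadd_firstn, vadd_skipn. auto.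
Qed.

Ltac tcw' ::= unfold wt in *; cbn [ty]; rewrite ?push_ty, ?cpow_ty;
  repeat match goal with H : ty _ ?f = Some _ |- context [ty _ ?f] => rewrite H end; simpl;
  eqbs; discriminate.

Fixpoint interp (f : term genDS) : term genD * list Z :=
  match f with
  | Gen (gOld g) => (Gen g, zeros (snd (dcD g)))
  | Gen gS => (Id 1, [1%Z])
  | Gen gSinv => (Id 1, [(-1)%Z])
  | Id n => (Id n, zeros n)
  | Comp f h => let p := interp f in let q := interp h in let r := push (fst p) (snd q) in
      (Comp (fst r) (fst q), vadd (snd p) (snd r))
  | Tens f h => (Tens (fst (interp f)) (fst (interp h)), snd (interp f) ++ snd (interp h))
  | Braid m n => (Braid m n, zeros (n + m))
  | BraidInv m n => (BraidInv m n, zeros (m + n))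
  end.

Lemma interp_ty f : ty dcD (fst (interp f)) = ty dcDS f.
Proof.
  induction f; simpl; auto.
  - destruct g; simpl; auto.
  - rewrite push_ty, IHf1, IHf2. auto.
  - rewrite IHf1, IHf2. auto.
Qed.
Lemma interp_wt f n m : wt dcDS f n m -> wt dcD (fst (interp f)) n m.
Proof. unfold wt; rewrite interp_ty; auto. Qed.

Lemma interp_len f : forall n m, wt dcDS f n m -> length (snd (interp f)) = m.
Proof.
  induction f; intros n0 m0 H.
  - destruct g as [[]| |]; unfold wt in H; simpl in H; injection H as <- <-; simpl; auto.
  - unfold wt in H; simpl in H; injection H as <- <-; apply zeros_len.
  - apply wt_comp_inv in H as [p [H1 H2]]. simpl. rewrite vadd_len.
    rewrite (IHf1 _ _ H2). erewrite push_len; eauto using interp_wt. lia.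
  - apply wt_tens_inv in H as [a [b [c [d [H1 [H2 [-> ->]]]]]]]. simpl.
    rewrite length_app; erewrite IHf1, IHf2; eauto.
  - unfold wt in H; simpl in H; injection H as <- <-; apply zeros_len.
  - unfold wt in H; simpl in H; injection H as <- <-; apply zeros_len.
Qed.

Ltac tcw2 := unfold wt in *; cbn [ty]; rewrite ?push_ty, ?cpow_ty, ?interp_ty;
  repeat match goal with H : ty _ ?f = Some _ |- context [ty _ ?f] => rewrite H end; simpl;
  eqbs; discriminate.

Lemma push_eqv g h n m k : eqvD g h -> wt dcD g n m -> length k = n -> Rel (push g k) (push h k).
Proof. intros; eapply push_eqv_aux; eauto. Qed.

Lemma vadd_zz k : vadd (zeros k) (zeros k) = zeros k.
Proof. induction k; simpl; auto. unfold zeros in *; simpl. rewrite IHk; auto. Qed.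

Lemma push_braid m n k : push (Braid m n) k = (Braid m n, skipn m k ++ firstn m k).
Proof. reflexivity. Qed.

Lemma interp_eqv f g : eqvS f g -> forall n m, wt dcDS f n m -> Rel (interp f) (interp g).
Proof.
  unfold eqvS. induction 1; intros n0 m0 Hw.
  - apply Rel_refl.
  - apply Rel_sym. apply (IHeqv n0 m0). unfold wt in *. rewrite (eqvS_ty _ _ H). auto.
  - eapply Rel_trans; [apply (IHeqv1 n0 m0)|apply (IHeqv2 n0 m0)]; auto.
    unfold wt in *. rewrite <- (eqvS_ty _ _ H). auto.
  -
    apply wt_comp_inv in Hw as [p [Hg Hf]]. simpl.
    destruct (IHeqv1 _ _ Hf) as [E1 E2]. destruct (IHeqv2 _ _ Hg) as [E3 E4].
    rewrite <- E4.
    destruct (push_eqv _ _ p m0 (snd (interp g)) E1) as [E5 E6]; auto using interp_wt.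
    { eapply interp_len; eauto. }
    split; simpl; [rewrite E5, E3; reflexivity | congruence].
  -
    apply wt_tens_inv in Hw as [a [b [c [d [Hf [Hg [-> ->]]]]]]]. simpl.
    destruct (IHeqv1 _ _ Hf) as [E1 E2]. destruct (IHeqv2 _ _ Hg) as [E3 E4].
    split; simpl; [rewrite E1, E3; reflexivity | congruence].
  - destruct H; split; simpl; unfold src; simpl; try reflexivity.
    all: unfold Wt; simpl; repeat first [rewrite IdL by tcw' | rewrite IdR by tcw' | rewrite (e_tid dcD relD 1 1); simpl];
      try reflexivity; try (apply e_rel; constructor).
  -
    simpl. split; simpl; [apply IdL; tcw2|].
    rewrite <- (interp_len _ _ _ H). apply vadd_zeros_l.
  -
    simpl. destruct (push_zero _ _ _ (interp_wt _ _ _ H)) as [E1 E2].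
    rewrite E2. split; simpl; [rewrite E1; apply IdR; tcw2|].
    rewrite <- (interp_len _ _ _ H). apply vadd_zeros_r.
  -
    simpl.
    assert (L1 : length (snd (interp g)) = c) by (eapply interp_len; eauto).
    assert (L2 : length (snd (push (fst (interp g)) (snd (interp h)))) = c)
      by (eapply push_len; eauto using interp_wt, interp_len).
    destruct (push_act _ _ _ _ _ (interp_wt _ _ _ H1) L1 L2) as [E1 E2].
    split; simpl; [rewrite E1; apply A_l; tcw2 | rewrite E2; apply vadd_assoc].
  -
    simpl. split; simpl; [apply TA; tcw2 | rewrite app_assoc; auto].
  - simpl. split; simpl; auto. apply TUL; tcw2.
  - simpl. split; simpl; [apply TUR; tcw2 | apply app_nil_r].
  - simpl. split; simpl; [apply e_tid | symmetry; apply zeros_app].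
  -
    simpl. rewrite (src_wt _ _ _ (interp_wt _ _ _ H0)).
    assert (Lg : length (snd (interp g)) = b) by (eapply interp_len; eauto).
    rewrite firstn_app_l, skipn_app_l by auto.
    split; simpl; [apply IC; tcw2|].
    apply vadd_app. rewrite (interp_len _ _ _ H0). symmetry; eapply push_len; eauto using interp_wt.
  -
    cbn [interp fst snd]. rewrite push_braid. cbn [fst snd].
    assert (Lf : length (snd (interp f)) = b) by (eapply interp_len; eauto).
    assert (Lg : length (snd (interp g)) = d) by (eapply interp_len; eauto).
    rewrite firstn_app_l, skipn_app_l by auto.
    assert (Hw2 : wt dcD (Tens (fst (interp g)) (fst (interp f))) (c + a) (d + b))
      by (apply wt_tens; apply interp_wt; auto).
    destruct (push_zero _ _ _ Hw2) as [E1 E2]. rewrite E2.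
    split; cbn [fst snd].
    + rewrite E1. apply bnat; apply interp_wt; auto.
    + replace (d + b) with (length (snd (interp g) ++ snd (interp f))) by (rewrite length_app; lia).
      rewrite vadd_zeros_l, vadd_zeros_r. auto.
  -
    cbn [interp fst snd]. destruct (push_zero (BraidInv m n) (n + m) (m + n) ltac:(tc)) as [E1 E2].
    split; cbn [fst snd]; [rewrite E1; apply e_braid_inv1|].
    rewrite E2. rewrite <- (zeros_len (m + n)) at 1. apply vadd_zeros_l.
  -
    cbn [interp fst snd]. destruct (push_zero (Braid m n) (m + n) (n + m) ltac:(tc)) as [E1 E2].
    split; cbn [fst snd]; [rewrite E1; apply e_braid_inv2|].
    rewrite E2. rewrite <- (zeros_len (n + m)) at 1. apply vadd_zeros_l.
  -
    cbn [interp fst snd]. rewrite <- zeros_app.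
    destruct (push_zero (Tens (Id n) (Braid m p)) (n + m + p) (n + (p + m))) as [E1 E2].
    { unfold wt; simpl. f_equal; f_equal; lia. }
    split; cbn [fst snd]; [rewrite E1; apply e_hex1|].
    rewrite E2, <- zeros_app. replace (n + (p + m)) with (n + p + m) by lia.
    cbn [snd]. rewrite vadd_zz. auto.
  -
    cbn [interp fst snd]. rewrite <- zeros_app.
    destruct (push_zero (Tens (Braid m p) (Id n)) (m + p + n) (p + m + n)) as [E1 E2].
    { unfold wt; simpl. f_equal; f_equal; lia. }
    replace (m + (n + p)) with (m + p + n) by lia.
    split; cbn [fst snd]; [rewrite E1; apply e_hex2|].
    replace (m + (p + n)) with (m + p + n) by lia. rewrite E2. cbn [snd].
    rewrite <- zeros_app. replace (p + m + n) with (p + (m + n)) by lia. rewrite vadd_zz; auto.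
Qed.

Lemma iota_ty g : ty dcDS (iota g) = ty dcD g.
Proof. induction g; simpl; auto; unfold iota in *; rewrite IHg1, IHg2; auto. Qed.
Lemma iota_wt g n m : wt dcD g n m -> wt dcDS (iota g) n m.
Proof. unfold wt; rewrite iota_ty; auto. Qed.

Ltac tcw3 := unfold wt in *; cbn [ty]; rewrite ?push_ty, ?cpow_ty, ?interp_ty, ?iota_ty;
  repeat match goal with H : ty _ ?f = Some _ |- context [ty _ ?f] => rewrite H end; simpl;
  eqbs; discriminate.

Lemma interp_iota g : forall n m, wt dcD g n m -> Rel (interp (iota g)) (g, zeros m).
Proof.
  induction g; intros n0 m0 H.
  - unfold wt in H; simpl in H; injection H as E. simpl. rewrite E. apply Rel_refl.
  - unfold wt in H; simpl in H; injection H as <- <-. apply Rel_refl.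
  - apply wt_comp_inv in H as [p [H1 H2]]. change (iota (Comp g1 g2)) with (Comp (iota g1) (iota g2)).
    cbn [interp fst snd].
    destruct (IHg1 _ _ H2) as [E1 E2]. destruct (IHg2 _ _ H1) as [E3 E4].
    cbn [fst snd] in *. rewrite E4, E2.
    assert (Hw : wt dcD (fst (interp (iota g1))) p m0) by (apply interp_wt, iota_wt; auto).
    destruct (push_eqv _ _ p m0 (zeros p) E1 Hw (zeros_len p)) as [E5 E6].
    destruct (push_zero _ _ _ H2) as [E7 E8].
    split; cbn [fst snd].
    + rewrite E5, E7, E3. reflexivity.
    + rewrite E6, E8. apply vadd_zz.
  - apply wt_tens_inv in H as [a [b [c [d [H1 [H2 [-> ->]]]]]]].
    change (iota (Tens g1 g2)) with (Tens (iota g1) (iota g2)). cbn [interp fst snd].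
    destruct (IHg1 _ _ H1) as [E1 E2]. destruct (IHg2 _ _ H2) as [E3 E4].
    split; cbn [fst snd] in *; [rewrite E1, E3; reflexivity | rewrite E2, E4, zeros_app; auto].
  - unfold wt in H; simpl in H; injection H as <- <-. apply Rel_refl.
  - unfold wt in H; simpl in H; injection H as <- <-. apply Rel_refl.
Qed.

Ltac tcw3 ::= unfold wt in *; cbn [ty]; rewrite ?push_ty, ?cpow_ty, ?interp_ty, ?iota_ty;
  repeat match goal with H : ty _ ?f = Some _ |- context [ty _ ?f] => rewrite H end; simpl;
  eqbs; discriminate.

Local Notation "f == g" := (eqvS f g) (at level 70).
Local Notation I1 := (@Id genDS 1).

Definition Spow (z : Z) : term genDS := pw SS SSinv (Id 1) z.
Fixpoint Svec (k : list Z) : term genDS :=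
  match k with [] => Id 0 | a :: l => Tens (Spow a) (Svec l) end.

Lemma wt_S : wt dcDS SS 1 1. Proof. reflexivity. Qed.
Lemma wt_Si : wt dcDS SSinv 1 1. Proof. reflexivity. Qed.
Lemma S_Si : Comp SS SSinv == Id 1. Proof. apply e_rel; constructor. Qed.
Lemma Si_S : Comp SSinv SS == Id 1. Proof. apply e_rel; constructor. Qed.
Lemma wt_Spow z : wt dcDS (Spow z) 1 1.
Proof. apply wt_pw; [apply wt_S|apply wt_Si]. Qed.
Lemma Spow_ty z : ty dcDS (Spow z) = Some (1,1). Proof. apply wt_Spow. Qed.
Lemma Spow_add a b : Comp (Spow a) (Spow b) == Spow (a + b).
Proof. apply pw_add; [exact wt_S|exact wt_Si|exact S_Si|exact Si_S]. Qed.
Lemma wt_Svec k : wt dcDS (Svec k) (length k) (length k).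
Proof. induction k; simpl; [reflexivity|]. unfold wt in *; simpl; rewrite Spow_ty, IHk; auto. Qed.
Lemma Svec_ty k : ty dcDS (Svec k) = Some (length k, length k). Proof. apply wt_Svec. Qed.

Ltac tcs := unfold wt in *; cbn [ty]; rewrite ?iota_ty, ?push_ty, ?cpow_ty, ?Spow_ty, ?Svec_ty;
  repeat match goal with H : ty _ ?f = Some _ |- context [ty _ ?f] => rewrite H end; simpl;
  eqbs; try discriminate; try reflexivity.

Lemma Svec_app l1 l2 : Svec (l1 ++ l2) == Tens (Svec l1) (Svec l2).
Proof.
  induction l1; simpl.
  - symmetry; apply TUL; tcs.
  - rewrite IHl1. symmetry; apply TA; tcs.
Qed.
Lemma Svec_vadd a b : length a = length b -> Comp (Svec a) (Svec b) == Svec (vadd a b).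
Proof.
  revert b; induction a as [|x a IH]; intros [|y b] L; simpl in *; try discriminate.
  - apply IdL; tcs.
  - rewrite IC by tcs. rewrite Spow_add, IH by lia. reflexivity.
Qed.
Lemma Svec_zeros n : Svec (zeros n) == Id n.
Proof.
  induction n; simpl; [reflexivity|]. unfold zeros in *. simpl. rewrite IHn. apply e_tid.
Qed.
Lemma iota_pwn w m : iota (pwn w (Id 2) m) = pwn (iota w) (Id 2) m.
Proof. induction m; simpl; auto. unfold iota in *; simpl; rewrite IHm; auto. Qed.
Lemma iota_cpow z : iota (cpow z) = cpow z.
Proof. unfold cpow, pw; destruct z; auto; apply iota_pwn. Qed.

Lemma cut2 X Y Z r : Comp X Y == Z -> ty dcDS (Comp (Comp X Y) r) <> None ->
  Comp X (Comp Y r) == Comp Z r.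
Proof. intros H T. rewrite A_l by auto. rewrite H. reflexivity. Qed.
Ltac ra := repeat (rewrite A_r by tcs).
Local Notation c := (@Braid genDS 1 1).
Local Notation ci := (@BraidInv genDS 1 1).

Lemma c_swapS A B : wt dcDS A 1 1 -> wt dcDS B 1 1 -> Comp c (Tens A B) == Comp (Tens B A) c.
Proof. apply c_swap. Qed.
Lemma ci_swapS A B : wt dcDS A 1 1 -> wt dcDS B 1 1 -> Comp ci (Tens A B) == Comp (Tens B A) ci.
Proof. apply ci_swap. Qed.
Lemma TT_inv A B : wt dcDS A 1 1 -> wt dcDS B 1 1 -> Comp A B == Id 1 -> Comp (Tens A A) (Tens B B) == Id 2.
Proof. intros HA HB H. rewrite IC by tcs. rewrite H. apply e_tid. Qed.

Lemma Delta_Si : Comp DeltaS SSinv == Comp (Tens SSinv SSinv) (Comp ci DeltaS).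
Proof.
  symmetry.
  rewrite <- (IdR 1 DeltaS) at 1 by tcs.
  rewrite <- S_Si. ra.
  rewrite (cut2 DeltaS SS) by (try (apply e_rel; constructor); tcs). ra.
  rewrite (cut2 ci (Tens SS SS)) by (try (apply ci_swapS; reflexivity); tcs). ra.
  rewrite (cut2 ci c) by (try (apply ci_c); tcs). rewrite IdL by tcs.
  rewrite (cut2 (Tens SSinv SSinv) (Tens SS SS)) by (try (apply TT_inv; [reflexivity|reflexivity|apply Si_S]); tcs).
  apply IdL; tcs.
Qed.

Lemma delta_gen (u w : term genDS) : wt dcDS u 1 1 -> wt dcDS w 2 2 ->
  (forall A B, wt dcDS A 1 1 -> wt dcDS B 1 1 -> Comp w (Tens A B) == Comp (Tens B A) w) ->
  Comp DeltaS u == Comp (Tens u u) (Comp w DeltaS) ->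
  forall m, Comp DeltaS (pwn u (Id 1) m) ==
    Comp (Tens (pwn u (Id 1) m) (pwn u (Id 1) m)) (Comp (pwn w (Id 2) m) DeltaS).
Proof.
  intros Hu Hw Hs HD m. induction m.
  - simpl. rewrite IdR by tcs. rewrite (IdL 2 DeltaS) by tcs. rewrite e_tid. symmetry; apply IdL; tcs.
  - change (pwn u (Id 1) (S m)) with (Comp u (pwn u (Id 1) m)).
    change (pwn w (Id 2) (S m)) with (Comp w (pwn w (Id 2) m)).
    assert (HP : wt dcDS (pwn u (Id 1) m) 1 1) by (apply wt_pwn; auto).
    assert (HC : wt dcDS (pwn w (Id 2) m) 2 2) by (apply wt_pwn; auto).
    rewrite A_l by tcs. rewrite HD. ra. rewrite IHm. ra.
    rewrite (cut2 w (Tens _ _)) by (try (apply Hs; auto); tcs). ra.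
    rewrite (cut2 (Tens u u) (Tens _ _)) by (try (apply IC; tcs); tcs).
    reflexivity.
Qed.

Lemma Delta_Spow z : Comp DeltaS (Spow z) == Comp (Tens (Spow z) (Spow z)) (Comp (cpow z) DeltaS).
Proof.
  unfold Spow, cpow. destruct (Z_cases z) as [[m ->]|[m ->]].
  - rewrite !pw_nat. apply delta_gen; [reflexivity|reflexivity|apply c_swapS|apply e_rel; constructor].
  - rewrite !pw_neg. apply delta_gen; [reflexivity|reflexivity|apply ci_swapS|apply Delta_Si].
Qed.

Lemma eps_gen (e u : term genDS) : wt dcDS u 1 1 -> wt dcDS e 1 0 -> Comp e u == e ->
  forall m, Comp e (pwn u (Id 1) m) == e.
Proof.
  intros Hu He H m. induction m; simpl.
  - apply IdR; tcs.
  - assert (HP : wt dcDS (pwn u (Id 1) m) 1 1) by (apply wt_pwn; auto).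
    rewrite A_l by tcs. rewrite H. auto.
Qed.
Lemma eps_Si (e : term genDS) : wt dcDS e 1 0 -> Comp e SS == e -> Comp e SSinv == e.
Proof.
  intros He H. rewrite <- H at 1. rewrite A_r by tcs. rewrite S_Si. apply IdR; tcs.
Qed.
Lemma eps_Spow (e : term genDS) z : wt dcDS e 1 0 -> Comp e SS == e -> Comp e (Spow z) == e.
Proof.
  intros He H. unfold Spow. destruct (Z_cases z) as [[m ->]|[m ->]].
  - rewrite pw_nat. apply eps_gen; auto. reflexivity.
  - rewrite pw_neg. apply eps_gen; auto. reflexivity. apply eps_Si; auto.
Qed.

Lemma rel_om1 : Comp (OmegaS true) (Tens SS I1) == OmegaS false. Proof. apply e_rel; constructor. Qed.
Lemma rel_om2 : Comp (OmegaS true) (Tens I1 SS) == OmegaS false. Proof. apply e_rel; constructor. Qed.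
Lemma rel_om3 : Comp (OmegaS true) (Tens SSinv I1) == Comp (OmegaS false) c. Proof. apply e_rel; constructor. Qed.
Lemma rel_om4 : Comp (OmegaS true) (Tens I1 SSinv) == Comp (OmegaS false) c. Proof. apply e_rel; constructor. Qed.

Lemma TI_inv_l A B : wt dcDS A 1 1 -> wt dcDS B 1 1 -> Comp A B == Id 1 -> Comp (Tens A I1) (Tens B I1) == Id 2.
Proof. intros. rewrite IC by tcs. rewrite H1, IdL by tcs. apply e_tid. Qed.
Lemma TI_inv_r A B : wt dcDS A 1 1 -> wt dcDS B 1 1 -> Comp A B == Id 1 -> Comp (Tens I1 A) (Tens I1 B) == Id 2.
Proof. intros. rewrite IC by tcs. rewrite H1, IdL by tcs. apply e_tid. Qed.
Lemma TI_comm A B : wt dcDS A 1 1 -> wt dcDS B 1 1 -> Comp (Tens I1 A) (Tens B I1) == Comp (Tens B I1) (Tens I1 A).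
Proof. intros. rewrite !IC by tcs. rewrite !IdL, !IdR by tcs. reflexivity. Qed.

Lemma slot_mS_R : Comp (OmegaS false) (Tens I1 SS) == Comp (OmegaS true) (cpow (-1)).
Proof.
  simpl cpow. rewrite (IdR 2 ci) by tcs.
  rewrite <- (IdR 2 (OmegaS false)) at 1 by tcs. rewrite <- c_ci. ra.
  rewrite (cut2 (OmegaS false) c) by (try (symmetry; apply rel_om3); tcs). ra.
  rewrite (ci_swapS I1 SS) by reflexivity. ra.
  rewrite (cut2 (Tens SSinv I1) (Tens SS I1)) by (try (apply TI_inv_l; [reflexivity|reflexivity|apply Si_S]); tcs).
  rewrite IdL by tcs. reflexivity.
Qed.
Lemma slot_mS_L : Comp (OmegaS false) (Tens SS I1) == Comp (OmegaS true) (cpow (-1)).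
Proof.
  rewrite <- rel_om2. ra. rewrite TI_comm by reflexivity. rewrite A_l by tcs. rewrite rel_om1.
  apply slot_mS_R.
Qed.
Lemma slot_mSi_R : Comp (OmegaS false) (Tens I1 SSinv) == Comp (OmegaS true) (cpow 0).
Proof.
  rewrite <- rel_om2. ra. rewrite (TI_inv_r SS SSinv) by (try reflexivity; apply S_Si). reflexivity.
Qed.
Lemma slot_mSi_L : Comp (OmegaS false) (Tens SSinv I1) == Comp (OmegaS true) (cpow 0).
Proof.
  rewrite <- rel_om2. ra. rewrite TI_comm by reflexivity. rewrite A_l by tcs. rewrite rel_om3.
  rewrite A_r by tcs. rewrite c_swapS by reflexivity. rewrite A_l by tcs. rewrite slot_mS_L.
  simpl cpow. rewrite (IdR 2 ci) by tcs. ra. rewrite ci_c. reflexivity.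
Qed.
Lemma slot_pS_L : Comp (OmegaS true) (Tens SS I1) == Comp (OmegaS false) (cpow 0).
Proof. rewrite rel_om1. simpl cpow. symmetry; apply IdR; tcs. Qed.
Lemma slot_pS_R : Comp (OmegaS true) (Tens I1 SS) == Comp (OmegaS false) (cpow 0).
Proof. rewrite rel_om2. simpl cpow. symmetry; apply IdR; tcs. Qed.
Lemma slot_pSi_L : Comp (OmegaS true) (Tens SSinv I1) == Comp (OmegaS false) (cpow 1).
Proof. rewrite rel_om3. simpl cpow. rewrite (IdR 2 c) by tcs. reflexivity. Qed.
Lemma slot_pSi_R : Comp (OmegaS true) (Tens I1 SSinv) == Comp (OmegaS false) (cpow 1).
Proof. rewrite rel_om4. simpl cpow. rewrite (IdR 2 c) by tcs. reflexivity. Qed.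

Definition Wn (h : Z) : term genDS := Comp (OmegaS (Z.even h)) (cpow (- (h / 2))).

Lemma Wn_step (A B : term genDS) (e : Z) (dd : bool -> Z) : wt dcDS A 1 1 -> wt dcDS B 1 1 ->
  (forall p, Comp (OmegaS p) (Tens A B) == Comp (OmegaS (negb p)) (cpow (dd p))) ->
  (forall p, Comp (OmegaS p) (Tens B A) == Comp (OmegaS (negb p)) (cpow (dd p))) ->
  (forall h, Z.even (h + e) = negb (Z.even h) /\ (- ((h + e) / 2) = dd (Z.even h) + - (h / 2))%Z) ->
  forall h, Comp (Wn h) (Tens A B) == Wn (h + e).
Proof.
  intros HA HB H1 H2 Har h. unfold Wn.
  rewrite A_r by tcs. rewrite cpow_swap by auto. destruct (Har h) as [E1 E2]. rewrite E1, E2.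
  destruct (Z.even (- (h / 2))); rewrite A_l by tcs; [rewrite H1|rewrite H2]; rewrite A_r by tcs; rewrite cpow_add; reflexivity.
Qed.

Lemma ev2 q : Z.even (2 * q) = true. Proof. apply Z.even_even. Qed.
Lemma ev21 q : Z.even (2 * q + 1) = false. Proof. rewrite Z.even_add, Z.even_even; reflexivity. Qed.
Lemma arith_S h : Z.even (h + 1) = negb (Z.even h) /\
  (- ((h + 1) / 2) = (if Z.even h then 0 else -1) + - (h / 2))%Z.
Proof.
  destruct (Z.Even_or_Odd h) as [[q ->]|[q ->]].
  - rewrite ev21, ev2. cbv beta iota. split; [reflexivity|Z.div_mod_to_equations; lia].
  - replace (2 * q + 1 + 1)%Z with (2 * (q + 1))%Z by lia. rewrite ev21, ev2. cbv beta iota. split; [reflexivity|Z.div_mod_to_equations; lia].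
Qed.
Lemma arith_Si h : Z.even (h + -1) = negb (Z.even h) /\
  (- ((h + -1) / 2) = (if Z.even h then 1 else 0) + - (h / 2))%Z.
Proof.
  destruct (Z.Even_or_Odd h) as [[q ->]|[q ->]].
  - replace (2 * q + -1)%Z with (2 * (q - 1) + 1)%Z by lia. rewrite ev21, ev2. cbv beta iota. split; [reflexivity|Z.div_mod_to_equations; lia].
  - replace (2 * q + 1 + -1)%Z with (2 * q)%Z by lia. rewrite ev21, ev2. cbv beta iota. split; [reflexivity|Z.div_mod_to_equations; lia].
Qed.

Lemma Wn_S_L h : Comp (Wn h) (Tens SS I1) == Wn (h + 1).
Proof.
  apply (Wn_step _ _ 1 (fun p => if p then 0 else -1)%Z); try reflexivity; [| |apply arith_S];
  intros []; simpl; auto using slot_pS_L, slot_pS_R, slot_mS_L, slot_mS_R.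
Qed.
Lemma Wn_S_R h : Comp (Wn h) (Tens I1 SS) == Wn (h + 1).
Proof.
  apply (Wn_step _ _ 1 (fun p => if p then 0 else -1)%Z); try reflexivity; [| |apply arith_S];
  intros []; simpl; auto using slot_pS_L, slot_pS_R, slot_mS_L, slot_mS_R.
Qed.
Lemma Wn_Si_L h : Comp (Wn h) (Tens SSinv I1) == Wn (h + -1).
Proof.
  apply (Wn_step _ _ (-1) (fun p => if p then 1 else 0)%Z); try reflexivity; [| |apply arith_Si];
  intros []; simpl; auto using slot_pSi_L, slot_pSi_R, slot_mSi_L, slot_mSi_R.
Qed.
Lemma Wn_Si_R h : Comp (Wn h) (Tens I1 SSinv) == Wn (h + -1).
Proof.
  apply (Wn_step _ _ (-1) (fun p => if p then 1 else 0)%Z); try reflexivity; [| |apply arith_Si];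
  intros []; simpl; auto using slot_pSi_L, slot_pSi_R, slot_mSi_L, slot_mSi_R.
Qed.

Lemma Wn_eqz a b : a = b -> Wn a == Wn b. Proof. intros ->; reflexivity. Qed.
Lemma Wn_ty h : ty dcDS (Wn h) = Some (2, 0).
Proof. unfold Wn. cbn [ty]. rewrite cpow_ty. reflexivity. Qed.

Lemma Wn_pwn_L (u : term genDS) e : wt dcDS u 1 1 ->
  (forall h, Comp (Wn h) (Tens u I1) == Wn (h + e)) ->
  forall m h, Comp (Wn h) (Tens (pwn u (Id 1) m) I1) == Wn (h + Z.of_nat m * e).
Proof.
  intros Hu H m. induction m; intro h.
  - simpl. rewrite e_tid. rewrite IdR by (cbn [ty]; rewrite Wn_ty; simpl; discriminate). apply Wn_eqz; lia.
  - assert (HP : wt dcDS (pwn u (Id 1) m) 1 1) by (apply wt_pwn; auto).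
    change (pwn u (Id 1) (S m)) with (Comp u (pwn u (Id 1) m)).
    rewrite (TIC_l 1 u (pwn u (Id 1) m) 1 1 1) by auto.
    rewrite A_l by (unfold wt in *; cbn [ty]; rewrite Wn_ty, HP, Hu; simpl; discriminate).
    rewrite H, IHm. apply Wn_eqz; lia.
Qed.
Lemma Wn_pwn_R (u : term genDS) e : wt dcDS u 1 1 ->
  (forall h, Comp (Wn h) (Tens I1 u) == Wn (h + e)) ->
  forall m h, Comp (Wn h) (Tens I1 (pwn u (Id 1) m)) == Wn (h + Z.of_nat m * e).
Proof.
  intros Hu H m. induction m; intro h.
  - simpl. rewrite e_tid. rewrite IdR by (cbn [ty]; rewrite Wn_ty; simpl; discriminate). apply Wn_eqz; lia.
  - assert (HP : wt dcDS (pwn u (Id 1) m) 1 1) by (apply wt_pwn; auto).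
    change (pwn u (Id 1) (S m)) with (Comp u (pwn u (Id 1) m)).
    rewrite (TIC_r 1 u (pwn u (Id 1) m) 1 1 1) by auto.
    rewrite A_l by (unfold wt in *; cbn [ty]; rewrite Wn_ty, HP, Hu; simpl; discriminate).
    rewrite H, IHm. apply Wn_eqz; lia.
Qed.
Lemma Wn_Spow_L x h : Comp (Wn h) (Tens (Spow x) I1) == Wn (h + x).
Proof.
  unfold Spow. destruct (Z_cases x) as [[m ->]|[m ->]].
  - rewrite pw_nat. rewrite (Wn_pwn_L SS 1); [apply Wn_eqz; lia|reflexivity|apply Wn_S_L].
  - rewrite pw_neg. rewrite (Wn_pwn_L SSinv (-1)); [apply Wn_eqz; lia|reflexivity|apply Wn_Si_L].
Qed.
Lemma Wn_Spow_R x h : Comp (Wn h) (Tens I1 (Spow x)) == Wn (h + x).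
Proof.
  unfold Spow. destruct (Z_cases x) as [[m ->]|[m ->]].
  - rewrite pw_nat. rewrite (Wn_pwn_R SS 1); [apply Wn_eqz; lia|reflexivity|apply Wn_S_R].
  - rewrite pw_neg. rewrite (Wn_pwn_R SSinv (-1)); [apply Wn_eqz; lia|reflexivity|apply Wn_Si_R].
Qed.

Lemma iota_Wt t : iota (Wt t) = Wn t.
Proof. unfold Wt, Wn, iota. simpl. fold (iota (cpow (- (t / 2)))). rewrite iota_cpow. auto. Qed.

Lemma omega_sound b x1 x2 :
  Comp (OmegaS b) (Tens (Spow x1) (Tens (Spow x2) (Id 0))) ==
  Comp (Id 0) (iota (Wt (x1 + x2 + (if b then 0 else 1)))).
Proof.
  rewrite iota_Wt. rewrite IdL by (cbn [ty]; rewrite Wn_ty; simpl; discriminate).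
  rewrite (TUR (Spow x2)) by (rewrite Spow_ty; discriminate).
  transitivity (Comp (Wn (if b then 0 else 1)) (Tens (Spow x1) (Spow x2))).
  - destruct b; unfold Wn; simpl; rewrite (IdR 2) by (cbn [ty]; simpl; discriminate); reflexivity.
  - rewrite <- (IdL 1 (Spow x2)) by tcs. rewrite <- (IdR 1 (Spow x1)) at 1 by tcs.
    rewrite <- IC by tcs.
    rewrite A_l by (cbn [ty]; rewrite Wn_ty, !Spow_ty; simpl; discriminate).
    rewrite Wn_Spow_L, Wn_Spow_R. apply Wn_eqz. destruct b; lia.
Qed.



Ltac tcs ::= unfold wt in *; cbn [ty]; rewrite ?iota_ty, ?push_ty, ?interp_ty, ?cpow_ty, ?Spow_ty, ?Svec_ty;
  repeat match goal with H : ty _ ?f = Some _ |- context [ty _ ?f] => rewrite H end; simpl;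
  eqbs; try discriminate; try reflexivity.

Lemma sound_push g : forall n m k, wt dcD g n m -> length k = n ->
  Comp (iota g) (Svec k) == Comp (Svec (snd (push g k))) (iota (fst (push g k))).
Proof.
  induction g; intros n0 m0 k H L.
  - destruct g; unfold wt in H; simpl in H; injection H as <- <-.
    + destruct (length1 k L) as [x ->]. cbn [push hd fst snd Svec].
      change (iota (Comp (cpow x) DeltaD)) with (Comp (iota (cpow x)) DeltaS). rewrite iota_cpow.
      change (iota DeltaD) with DeltaS.
      rewrite !(TUR (Spow x)) by (rewrite Spow_ty; discriminate). apply Delta_Spow.
    + destruct (length1 k L) as [x ->]. cbn [push hd fst snd Svec]. change (iota EpsD) with EpsS.
      rewrite (TUR (Spow x)) by (rewrite Spow_ty; discriminate). rewrite IdL by tcs.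
      apply eps_Spow; [reflexivity| apply e_rel; constructor].
    + destruct (length2 k L) as [x1 [x2 ->]]. cbn [push nth fst snd Svec].
      change (iota (Gen (gOmega plus))) with (OmegaS plus). apply omega_sound.
    + destruct (length1 k L) as [x ->]. cbn [push hd fst snd Svec]. change (iota (Gen (gTheta plus))) with (ThetaS plus).
      rewrite (TUR (Spow x)) by (rewrite Spow_ty; discriminate). rewrite IdL by tcs.
      apply eps_Spow; [reflexivity| apply e_rel; constructor].
  - unfold wt in H; simpl in H; injection H as <- <-. cbn [push fst snd]. change (iota (Id n)) with (@Id genDS n).
    subst. rewrite IdL by tcs. rewrite IdR by tcs. reflexivity.
  - apply wt_comp_inv in H as [p [H1 H2]]. cbn [push fst snd].
    change (iota (Comp g1 g2)) with (Comp (iota g1) (iota g2)).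
    change (iota (Comp (fst (push g1 (snd (push g2 k)))) (fst (push g2 k))))
      with (Comp (iota (fst (push g1 (snd (push g2 k))))) (iota (fst (push g2 k)))).
    assert (L1 : length (snd (push g2 k)) = p) by (eapply push_len; eauto).
    assert (L2 : length (snd (push g1 (snd (push g2 k)))) = m0) by (eapply push_len; eauto).
    rewrite A_r by tcs. rewrite (IHg2 _ _ _ H1 L).
    rewrite A_l by tcs. rewrite (IHg1 _ _ _ H2 L1). apply A_r; tcs.
  - apply wt_tens_inv in H as [a [b [c [d [H1 [H2 [-> ->]]]]]]]. cbn [push fst snd].
    change (iota (Tens g1 g2)) with (Tens (iota g1) (iota g2)).
    rewrite (src_wt _ _ _ H1).
    match goal with |- _ == Comp _ ?X => change X with (Tens (iota (fst (push g1 (firstn a k)))) (iota (fst (push g2 (skipn a k))))) end.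
    assert (La : length (firstn a k) = a) by (rewrite length_firstn; lia).
    assert (Lc : length (skipn a k) = c) by (rewrite length_skipn; lia).
    assert (Lb : length (snd (push g1 (firstn a k))) = b) by (eapply push_len; eauto).
    assert (Ld : length (snd (push g2 (skipn a k))) = d) by (eapply push_len; eauto).
    assert (E : Svec k == Tens (Svec (firstn a k)) (Svec (skipn a k)))
      by (rewrite <- Svec_app, firstn_skipn; reflexivity).
    rewrite E. rewrite IC by tcs. rewrite (IHg1 _ _ _ H1 La), (IHg2 _ _ _ H2 Lc).
    rewrite Svec_app. rewrite IC by tcs. reflexivity.
  - unfold wt in H; simpl in H; injection H as <- <-. cbn [push fst snd]. change (iota (Braid m n)) with (@Braid genDS m n).
    destruct (split_list k m n) as [A [B [-> [LA LB]]]]; auto.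
    rewrite firstn_app_l, skipn_app_l by auto.
    rewrite !Svec_app. pose proof (wt_Svec A). pose proof (wt_Svec B). rewrite LA, LB in *.
    apply bnat; auto.
  - unfold wt in H; simpl in H; injection H as <- <-. cbn [push fst snd]. change (iota (BraidInv m n)) with (@BraidInv genDS m n).
    destruct (split_list k n m) as [A [B [-> [LA LB]]]]; auto.
    rewrite firstn_app_l, skipn_app_l by auto.
    rewrite !Svec_app. pose proof (wt_Svec A). pose proof (wt_Svec B). rewrite LA, LB in *.
    apply (binat (Svec B) (Svec A)); auto.
Qed.

Lemma sound_interp f : forall n m, wt dcDS f n m -> f == Comp (Svec (snd (interp f))) (iota (fst (interp f))).
Proof.
  induction f; intros n0 m0 H.
  - destruct g as [g| |]; unfold wt in H; simpl in H; injection H as E.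
    + cbn [interp fst snd]. rewrite Svec_zeros. change (iota (Gen g)) with (Gen (gOld g)).
      symmetry; apply IdL. cbn [ty]. destruct g; simpl; discriminate.
    + subst. cbn [interp fst snd Svec]. simpl. rewrite (IdR 1 SS) by tcs.
      change (iota (Id 1)) with (@Id genDS 1). rewrite TUR by tcs. rewrite IdR by tcs. reflexivity.
    + subst. cbn [interp fst snd Svec]. simpl. rewrite (IdR 1 SSinv) by tcs.
      change (iota (Id 1)) with (@Id genDS 1). rewrite TUR by tcs. rewrite IdR by tcs. reflexivity.
  - unfold wt in H; simpl in H; injection H as <- <-. cbn [interp fst snd].
    rewrite Svec_zeros. symmetry; apply IdL; tcs.
  - apply wt_comp_inv in H as [p [H1 H2]]. cbn [interp fst snd].
    change (iota (Comp (fst (push (fst (interp f1)) (snd (interp f2)))) (fst (interp f2))))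
      with (Comp (iota (fst (push (fst (interp f1)) (snd (interp f2))))) (iota (fst (interp f2)))).
    assert (Hg1 : wt dcD (fst (interp f1)) p m0) by (apply interp_wt; auto).
    assert (L2 : length (snd (interp f2)) = p) by (eapply interp_len; eauto).
    assert (L1 : length (snd (interp f1)) = m0) by (eapply interp_len; eauto).
    assert (L3 : length (snd (push (fst (interp f1)) (snd (interp f2)))) = m0) by (eapply push_len; eauto).
    rewrite (IHf1 _ _ H2) at 1. rewrite (IHf2 _ _ H1) at 1.
    rewrite A_r by tcs. rewrite (A_l (iota (fst (interp f1)))) by tcs.
    rewrite (sound_push _ _ _ _ Hg1 L2).
    rewrite (A_r (Svec _)) by tcs. rewrite A_l by tcs.
    rewrite Svec_vadd by lia. reflexivity.
  - apply wt_tens_inv in H as [a [b [c [d [H1 [H2 [-> ->]]]]]]]. cbn [interp fst snd].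
    change (iota (Tens (fst (interp f1)) (fst (interp f2)))) with (Tens (iota (fst (interp f1))) (iota (fst (interp f2)))).
    assert (L1 : length (snd (interp f1)) = b) by (eapply interp_len; eauto).
    assert (L2 : length (snd (interp f2)) = d) by (eapply interp_len; eauto).
    rewrite (IHf1 _ _ H1) at 1. rewrite (IHf2 _ _ H2) at 1.
    rewrite Svec_app. rewrite IC by tcs. reflexivity.
  - unfold wt in H; simpl in H; injection H as <- <-. cbn [interp fst snd].
    rewrite Svec_zeros. symmetry; apply IdL; tcs.
  - unfold wt in H; simpl in H; injection H as <- <-. cbn [interp fst snd].
    rewrite Svec_zeros. symmetry; apply IdL; tcs.
Qed.

Definition Ginv (n : nat) (f : term genDS) : term genD := fst (interp f).

Lemma iota_EpsN n : iota (EpsN EpsD n) = EpsN EpsS n.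
Proof. induction n; simpl; auto. unfold iota in *; simpl; rewrite IHn; auto. Qed.
Lemma iota_DeltaN n : iota (DeltaN DeltaD n) = DeltaN DeltaS n.
Proof. induction n; simpl; auto. unfold iota in *; simpl; rewrite IHn; auto. Qed.
Lemma wt_EpsN n : wt dcD (EpsN EpsD n) n 0.
Proof. induction n; simpl; [reflexivity|]. unfold wt in *; simpl; rewrite IHn; auto. Qed.
Lemma wt_DeltaN n : wt dcD (DeltaN DeltaD n) n (n + n).
Proof.
  induction n; simpl; [reflexivity|]. unfold wt in *; simpl. rewrite IHn. simpl.
  eqbs. f_equal; f_equal; lia.
Qed.

Theorem theorem1p1 :
  exists Ginv : nat -> term genDS -> term genD,
    (forall n f, homS n f -> homD n (Ginv n f)) /\
    (forall n f g, homS n f -> homS n g -> eqvS f g -> eqvD (Ginv n f) (Ginv n g)) /\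
    (forall n, eqvD (Ginv n (convidS n)) (convidD n)) /\
    (forall n f g, homS n f -> homS n g ->
        eqvD (Ginv n (convS n f g)) (convD n (Ginv n f) (Ginv n g))) /\
    (forall n f, homD n f -> eqvD (Ginv n (iota f)) f) /\
    (forall n f, homS n f -> eqvS (iota (Ginv n f)) f).
Proof.
  exists Ginv. unfold homS, homD, Ginv. split; [|split; [|split; [|split; [|split]]]].
  - intros n f H. apply interp_wt; auto.
  - intros n f g Hf Hg E. apply (interp_eqv f g E n 0 Hf).
  - intros n. unfold convidS, convidD, conv_id. rewrite <- iota_EpsN.
    apply (interp_iota _ _ _ (wt_EpsN n)).
  - intros n f g Hf Hg. unfold convS, convD, conv_comp. rewrite <- iota_DeltaN.
    cbn [interp fst snd].
    destruct (interp_iota _ _ _ (wt_DeltaN n)) as [E1 E2]. cbn [fst snd] in *. rewrite E2.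
    idtac.
    assert (Hw : wt dcD (Tens (fst (interp f)) (fst (interp g))) (n + n) 0)
      by (apply (wt_tens (fst (interp f)) (fst (interp g)) n 0 n 0); apply interp_wt; auto).
    destruct (push_zero _ _ _ Hw) as [E3 E4]. cbn [fst] in E3. rewrite E3, E1. reflexivity.
  - intros n f H. destruct (interp_iota _ _ _ H) as [E1 E2]. exact E1.
  - intros n f H. symmetry. rewrite (sound_interp _ _ _ H) at 1.
    assert (Lf : length (snd (interp f)) = 0) by (eapply interp_len; eauto).
    destruct (snd (interp f)); [|simpl in Lf; lia]. simpl Svec. apply IdL. cbn [ty]. rewrite iota_ty, interp_ty.
    unfold wt in H; rewrite H. simpl. discriminate.
Qed.
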